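(* Any element $z\in RF(m)$ can be written in the form $$z=\prod_{i=1}^m x_i^{\alpha_i}\prod_{1\le i\le j\le m}[x_j,x_i]^{\beta_{i,j}}\prod_{i=1}^{m-1}\prod_{j=1}^{m-1}[[\omega_{i,j},x_i],x_j]$$ with $\alpha_i,\beta_{i,j}\in\mathbb Z$ and $\omega_{i,j}\in RF(m)$ (products taken in increasing order of the indices, lexicographically for pairs).
   Context: $RF(m)$ is the reduced free group on $x_1,\dots,x_m$: the quotient of the free group by the relations that each $x_i$ commutes with every conjugate of itself. Commutators are $[g,h]=g^{-1}h^{-1}gh$. *)

(* Defs.v *)
From Stdlib Require Import List ZArith Arith.
Import ListNotations.

(* A letter is (i, e): generator x_i (0-indexed, i < m) if e = false,
   its inverse x_i^{-1} if e = true. Words are lists of letters, read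
   left to right as products. *)
Definition letter := (nat * bool)%type.
Definition word := list letter.

Definition winv (w : word) : word :=
  rev (map (fun l : letter => (fst l, negb (snd l))) w).

Definition gen (i : nat) : word := [(i, false)].

Definition wcomm (g h : word) : word := winv g ++ winv h ++ g ++ h.

Definition wconj (h g : word) : word := winv g ++ h ++ g.

Fixpoint wrep (n : nat) (w : word) : word :=
  match n with O => [] | S n' => w ++ wrep n' w end.

Definition wpow (w : word) (k : Z) : word :=
  match k with
  | Z0 => []
  | Zpos p => wrep (Pos.to_nat p) w
  | Zneg p => wrep (Pos.to_nat p) (winv w)
  end.

Definition in_RF (m : nat) (w : word) : Prop :=
  Forall (fun l : letter => fst l < m) w.

(* The congruence on words defining RF(m): the smallest congruence
   containing free cancellation and the relations
   [x_i, g^{-1} x_i g] = 1 for every i < m and every word g over the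
   generators (i.e. x_i commutes with every conjugate of itself). *)
Inductive rf_eq (m : nat) : word -> word -> Prop :=
| rf_refl : forall u, rf_eq m u u
| rf_sym : forall u v, rf_eq m u v -> rf_eq m v u
| rf_trans : forall u v w, rf_eq m u v -> rf_eq m v w -> rf_eq m u w
| rf_ctx : forall a b u v, rf_eq m u v -> rf_eq m (a ++ u ++ b) (a ++ v ++ b)
| rf_free : forall i e, rf_eq m [(i, e); (i, negb e)] []
| rf_rel : forall i g, i < m -> in_RF m g ->
    rf_eq m (wcomm (gen i) (wconj (gen i) g)) [].

(* The normal form of the theorem, with 0-indexed generators:
   prod_{i<m} x_i^{alpha i}
   * prod_{i<=j<m, lex order} [x_j, x_i]^{beta i j}
   * prod_{i<m-1} prod_{j<m-1} [[omega i j, x_i], x_j]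
   (paper's indices 1..m correspond to 0..m-1 here). *)
Definition normal_form (m : nat) (alpha : nat -> Z) (beta : nat -> nat -> Z)
  (omega : nat -> nat -> word) : word :=
  flat_map (fun i => wpow (gen i) (alpha i)) (seq 0 m)
  ++ flat_map (fun i => flat_map (fun j => wpow (wcomm (gen j) (gen i)) (beta i j))
                                 (seq i (m - i)))
              (seq 0 m)
  ++ flat_map (fun i => flat_map (fun j => wcomm (wcomm (omega i j) (gen i)) (gen j))
                                 (seq 0 (m - 1)))
              (seq 0 (m - 1)).

(* Main.v *)
Require Import Defs.
From Stdlib Require Import List ZArith Arith Lia Setoid Morphisms Bool.
Import ListNotations.


Section RF.
Variable m : nat.

Infix "=~" := (rf_eq m) (at level 70).

Global Instance rf_Equiv : Equivalence (rf_eq m).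
Proof. constructor; [exact (rf_refl m)|exact (rf_sym m)|exact (rf_trans m)]. Qed.

Global Instance app_Proper : Proper (rf_eq m ==> rf_eq m ==> rf_eq m) (@app letter).
Proof.
  intros a a' Ha b b' Hb. transitivity (a' ++ b).
  - exact (rf_ctx m [] b a a' Ha).
  - pose proof (rf_ctx m a' [] b b' Hb) as H. rewrite !app_nil_r in H. exact H.
Qed.

Lemma winv_app a b : winv (a ++ b) = winv b ++ winv a.
Proof. unfold winv. rewrite map_app, rev_app_distr. reflexivity. Qed.
Lemma winv_winv a : winv (winv a) = a.
Proof. unfold winv. rewrite map_rev, rev_involutive, map_map.
  rewrite <- (map_id a) at 2. apply map_ext. intros [i e]; simpl; rewrite negb_involutive; reflexivity. Qed.
Lemma winv_nil : winv [] = [].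
Proof. reflexivity. Qed.
Lemma winv_cons l a : winv (l :: a) = winv a ++ [(fst l, negb (snd l))].
Proof. reflexivity. Qed.

Lemma inv_r a : a ++ winv a =~ [].
Proof.
  induction a as [|[i e] a IH]; [reflexivity|].
  rewrite winv_cons. simpl.
  change ((i,e) :: ?X) with ([(i,e)] ++ X). rewrite (app_assoc a).
  rewrite IH. simpl. apply rf_free.
Qed.
Lemma inv_l a : winv a ++ a =~ [].
Proof. pose proof (inv_r (winv a)) as H. rewrite winv_winv in H. exact H. Qed.

Global Instance winv_Proper : Proper (rf_eq m ==> rf_eq m) winv.
Proof.
  intros a b H.
  transitivity (winv a ++ (b ++ winv b)).
  - rewrite inv_r, app_nil_r. reflexivity.
  - rewrite app_assoc. transitivity ((winv a ++ a) ++ winv b).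
    + apply app_Proper; [apply app_Proper; [reflexivity|symmetry; exact H]|reflexivity].
    + rewrite inv_l. reflexivity.
Qed.

Lemma app_cancel_l a b c : a ++ b =~ a ++ c -> b =~ c.
Proof.
  intro H. transitivity (winv a ++ a ++ b).
  - rewrite app_assoc, inv_l. reflexivity.
  - rewrite H, app_assoc, inv_l. reflexivity.
Qed.

Lemma in_RF_app a b : in_RF m a -> in_RF m b -> in_RF m (a ++ b).
Proof. unfold in_RF. intros; apply Forall_app; auto. Qed.
Lemma in_RF_nil : in_RF m [].
Proof. constructor. Qed.
Lemma in_RF_winv a : in_RF m a -> in_RF m (winv a).
Proof. unfold in_RF, winv. intro H. apply Forall_rev. apply Forall_map.
  eapply Forall_impl; [|exact H]. intros [i e]; simpl; auto. Qed.
Lemma in_RF_letter i e : i < m -> in_RF m [(i,e)].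
Proof. intro; repeat constructor; auto. Qed.
Lemma in_RF_gen i : i < m -> in_RF m (gen i).
Proof. apply in_RF_letter. Qed.
Lemma in_RF_wcomm a b : in_RF m a -> in_RF m b -> in_RF m (wcomm a b).
Proof. intros; unfold wcomm; repeat apply in_RF_app; auto using in_RF_winv. Qed.
Lemma in_RF_wconj a b : in_RF m a -> in_RF m b -> in_RF m (wconj a b).
Proof. intros; unfold wconj; repeat apply in_RF_app; auto using in_RF_winv. Qed.
Lemma in_RF_cons l a : fst l < m -> in_RF m a -> in_RF m (l :: a).
Proof. intros; constructor; auto. Qed.
Lemma in_RF_wrep n a : in_RF m a -> in_RF m (wrep n a).
Proof. induction n; simpl; auto using in_RF_app, in_RF_nil. Qed.
Lemma in_RF_wpow a k : in_RF m a -> in_RF m (wpow a k).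
Proof. destruct k; simpl; auto using in_RF_wrep, in_RF_winv, in_RF_nil. Qed.

Inductive wt := WNil | WApp (a b : wt) | WAt (k : nat) | WInv (k : nat).

Fixpoint evalT (env : list word) (t : wt) : word :=
  match t with
  | WNil => []
  | WApp a b => evalT env a ++ evalT env b
  | WAt k => nth k env []
  | WInv k => winv (nth k env [])
  end.

Fixpoint flat (t : wt) : list (nat * bool) :=
  match t with
  | WNil => []
  | WApp a b => flat a ++ flat b
  | WAt k => [(k,false)]
  | WInv k => [(k,true)]
  end.

Definition evA (env : list word) (x : nat * bool) : word :=
  if snd x then winv (nth (fst x) env []) else nth (fst x) env [].
Definition evalL env (l : list (nat*bool)) : word := flat_map (evA env) l.

Lemma evalL_app env a b : evalL env (a ++ b) = evalL env a ++ evalL env b.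
Proof. apply flat_map_app. Qed.

Lemma evalT_flat env t : evalT env t = evalL env (flat t).
Proof.
  induction t; simpl; auto.
  - rewrite evalL_app, IHt1, IHt2; reflexivity.
  - unfold evalL; simpl. unfold evA; simpl. rewrite app_nil_r; reflexivity.
  - unfold evalL; simpl. unfold evA; simpl. rewrite app_nil_r; reflexivity.
Qed.

Definition push (x : nat*bool) (r : list (nat*bool)) :=
  match r with
  | y :: r' => if Nat.eqb (fst x) (fst y) && xorb (snd x) (snd y) then r' else x :: r
  | [] => [x]
  end.
Definition red (l : list (nat*bool)) := fold_right push [] l.

Lemma evA_cancel env k b b' : xorb b b' = true -> evA env (k,b) ++ evA env (k,b') =~ [].
Proof.
  destruct b, b'; simpl; intro H; try discriminate; unfold evA; simpl.
  - apply inv_l.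
  - apply inv_r.
Qed.

Lemma push_sound env x r : evalL env (push x r) =~ evA env x ++ evalL env r.
Proof.
  destruct r as [|y r]; simpl.
  - unfold evalL; simpl; rewrite app_nil_r; reflexivity.
  - destruct (Nat.eqb (fst x) (fst y) && xorb (snd x) (snd y)) eqn:E.
    + apply andb_true_iff in E as [E1 E2]. apply Nat.eqb_eq in E1.
      destruct x as [k b], y as [k' b']; simpl in *; subst.
      unfold evalL; simpl. rewrite app_assoc, evA_cancel by exact E2. reflexivity.
    + reflexivity.
Qed.

Lemma red_sound env l : evalL env (red l) =~ evalL env l.
Proof.
  induction l as [|x l IH]; simpl; [reflexivity|].
  rewrite push_sound, IH. reflexivity.
Qed.

Fixpoint leqb (a b : list (nat*bool)) : bool :=
  match a, b with
  | [], [] => true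
  | x :: a', y :: b' => Nat.eqb (fst x) (fst y) && Bool.eqb (snd x) (snd y) && leqb a' b'
  | _, _ => false
  end.
Lemma leqb_eq a b : leqb a b = true -> a = b.
Proof.
  revert b; induction a as [|[k c] a IH]; destruct b as [|[k' c'] b]; simpl; try discriminate; auto.
  intro H. apply andb_true_iff in H as [H H3]. apply andb_true_iff in H as [H1 H2].
  apply Nat.eqb_eq in H1; apply eqb_prop in H2; subst. f_equal. auto.
Qed.

Lemma free_sound env t1 t2 :
  leqb (red (flat t1)) (red (flat t2)) = true -> evalT env t1 =~ evalT env t2.
Proof.
  intro H. apply leqb_eq in H. rewrite !evalT_flat, <- (red_sound env (flat t1)), <- (red_sound env (flat t2)), H.
  reflexivity.
Qed.


End RF.

Ltac inl x l := match l with | nil => constr:(false) | ?y :: ?l' => constr:(ltac:(first [unify x y; exact true | let r := inl x l' in exact r]) : bool) end.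
Ltac add_atom a base oth :=
  let b1 := inl a base in let b2 := inl a oth in
  match constr:((b1, b2)) with (false,false) => constr:(a :: oth) | _ => oth end.
Ltac collect t base oth :=
  match t with
  | ?a ++ ?b => let o1 := collect a base oth in collect b base o1
  | @nil _ => oth
  | winv ?a => add_atom a base oth
  | ?a => add_atom a base oth
  end.
Ltac idx a env := match env with | ?y :: ?e => constr:(ltac:(first [unify a y; exact O | let n := idx a e in exact (S n)]) : nat) end.
Ltac lapp l1 l2 := match l1 with | nil => l2 | ?x :: ?r => let r' := lapp r l2 in constr:(x :: r') end.
Ltac reify t env :=
  match t with
  | ?a ++ ?b => let ra := reify a env in let rb := reify b env in constr:(WApp ra rb)
  | @nil _ => constr:(WNil)
  | winv ?a => let k := idx a env in constr:(WInv k)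
  | ?a => let k := idx a env in constr:(WAt k)
  end.
Ltac prep := unfold wcomm, wconj; repeat rewrite ?winv_app, ?winv_winv, ?winv_nil.
Ltac grp_core base :=
  match goal with |- rf_eq ?m ?L ?R =>
    let o := collect L base (@nil word) in let o := collect R base o in
    let env := lapp base o in
    let tl := reify L env in let tr := reify R env in
    change (rf_eq m (evalT (base ++ o) tl) (evalT (base ++ o) tr)) end.
Ltac grp := prep; grp_core (@nil word); apply free_sound; vm_compute; reflexivity.

Section T.
Variable m : nat.
Infix "=~" := (rf_eq m) (at level 70).
Lemma test1 a b c : wcomm (a ++ b) c =~ wconj (wcomm a c) b ++ wcomm b c.
Proof. grp. Qed.
End T.


Section A.
Variable m : nat.
Infix "=~" := (rf_eq m) (at level 70).

Global Instance wconj_Proper : Proper (rf_eq m ==> rf_eq m ==> rf_eq m) wconj.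
Proof. intros a a' H b b' H'. unfold wconj. rewrite H, H'. reflexivity. Qed.
Global Instance wcomm_Proper : Proper (rf_eq m ==> rf_eq m ==> rf_eq m) wcomm.
Proof. intros a a' H b b' H'. unfold wcomm. rewrite H, H'. reflexivity. Qed.

Definition commute a b := a ++ b =~ b ++ a.

Lemma comm_triv a b : wcomm a b =~ [] -> commute a b.
Proof. intro H. unfold commute. transitivity ((b ++ a) ++ wcomm a b); [grp|].
  rewrite H, app_nil_r. reflexivity. Qed.
Lemma commute_triv a b : commute a b -> wcomm a b =~ [].
Proof. unfold commute; intro H. transitivity (winv a ++ winv b ++ (a ++ b)); [grp|].
  rewrite H. grp. Qed.
Lemma commute_sym a b : commute a b -> commute b a.
Proof. unfold commute; intro; symmetry; auto. Qed.
Lemma commute_winv_l a b : commute a b -> commute (winv a) b.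
Proof. unfold commute; intro H.
  transitivity (winv a ++ (b ++ a) ++ winv a); [grp|]. rewrite <- H. grp. Qed.
Lemma commute_conj a b g : commute a b -> commute (wconj a g) (wconj b g).
Proof. unfold commute; intro H.
  transitivity (wconj (a ++ b) g); [grp|]. rewrite H. grp. Qed.
Lemma commute_app_r a b c : commute a b -> commute a c -> commute a (b ++ c).
Proof. unfold commute; intros H1 H2. rewrite app_assoc, H1, <- app_assoc, H2. grp. Qed.
Lemma commute_app_l a b c : commute a c -> commute b c -> commute (a ++ b) c.
Proof. intros; apply commute_sym, commute_app_r; apply commute_sym; auto. Qed.
Lemma commute_nil_r a : commute a [].
Proof. unfold commute; grp. Qed.
Global Instance commute_Proper : Proper (rf_eq m ==> rf_eq m ==> iff) commute.
Proof. intros a a' H b b' H'. unfold commute. rewrite H, H'. reflexivity. Qed.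

Lemma gen_conj_commute i g h b1 b2 : i < m -> in_RF m g -> in_RF m h ->
  commute (wconj [(i,b1)] g) (wconj [(i,b2)] h).
Proof.
  intros Hi Hg Hh.
  assert (K : forall g', in_RF m g' -> commute (gen i) (wconj (gen i) g')).
  { intros g' Hg'. apply comm_triv. apply rf_rel; auto. }
  assert (K2 : commute (wconj (gen i) g) (wconj (gen i) h)).
  { assert (H1 := K (g ++ winv h) (in_RF_app _ _ _ Hg (in_RF_winv _ _ Hh))).
    apply (commute_conj _ _ h) in H1.
    assert (E : wconj (wconj (gen i) (g ++ winv h)) h =~ wconj (gen i) g) by grp.
    rewrite E in H1. apply commute_sym. exact H1. }
  assert (Hinv : forall g', wconj [(i,true)] g' = winv (wconj (gen i) g')).
  { intro g'. unfold wconj. rewrite !winv_app, winv_winv, app_assoc. reflexivity. }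
  destruct b1, b2.
  - rewrite !Hinv. apply commute_winv_l, commute_sym, commute_winv_l, commute_sym. exact K2.
  - rewrite !Hinv. apply commute_winv_l. exact K2.
  - rewrite !Hinv. apply commute_sym, commute_winv_l, commute_sym. exact K2.
  - exact K2.
Qed.

Definition Aeval i (L : list (bool * word)) := flat_map (fun p => wconj [(i, fst p)] (snd p)) L.
Definition inA i w := i < m /\ exists L, Forall (fun p => in_RF m (snd p)) L /\ w =~ Aeval i L.

Lemma Aeval_app i a b : Aeval i (a ++ b) = Aeval i a ++ Aeval i b.
Proof. apply flat_map_app. Qed.

Lemma Aeval_commute i L1 L2 : i < m -> Forall (fun p => in_RF m (snd p)) L1 ->
  Forall (fun p => in_RF m (snd p)) L2 -> commute (Aeval i L1) (Aeval i L2).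
Proof.
  intros Hi H1 H2. induction H1 as [|[b g] L1 Hg H1 IH]; simpl.
  - unfold commute; grp.
  - apply commute_app_l; auto. clear IH H1.
    induction H2 as [|[b' h] L2 Hh H2 IH2]; simpl.
    + apply commute_nil_r.
    + apply commute_app_r; auto. apply gen_conj_commute; auto.
Qed.

Lemma inA_commute i a b : inA i a -> inA i b -> commute a b.
Proof.
  intros [Hi [L1 [H1 E1]]] [_ [L2 [H2 E2]]]. rewrite E1, E2. apply Aeval_commute; auto.
Qed.

Global Instance inA_Proper i : Proper (rf_eq m ==> iff) (inA i).
Proof. intros a b H. unfold inA. split; intros [Hi [L [HL E]]]; split; auto; exists L; split; auto;
  [rewrite <- H|rewrite H]; auto. Qed.

Lemma inA_nil i : i < m -> inA i [].
Proof. intro; split; auto; exists []; split; [constructor|reflexivity]. Qed.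
Lemma inA_app i a b : inA i a -> inA i b -> inA i (a ++ b).
Proof. intros [Hi [L1 [H1 E1]]] [_ [L2 [H2 E2]]]. split; auto. exists (L1 ++ L2).
  split; [apply Forall_app; auto|]. rewrite Aeval_app, E1, E2. reflexivity. Qed.
Lemma inA_letter i b : i < m -> inA i [(i,b)].
Proof. intro; split; auto. exists [(b,[])]. split; [repeat constructor|]. simpl. unfold wconj. simpl. reflexivity. Qed.
Lemma inA_gen i : i < m -> inA i (gen i).
Proof. apply inA_letter. Qed.

Lemma Aeval_winv i L : winv (Aeval i L) =~ Aeval i (rev (map (fun p => (negb (fst p), snd p)) L)).
Proof.
  induction L as [|[b g] L IH]; simpl; [reflexivity|].
  rewrite winv_app, IH, Aeval_app. simpl. rewrite app_nil_r. apply app_Proper; [reflexivity|].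
  unfold wconj. rewrite !winv_app, winv_winv. change (winv [(i,b)]) with [(i,negb b)].
  rewrite <- !app_assoc; reflexivity.
Qed.
Lemma inA_winv i a : inA i a -> inA i (winv a).
Proof. intros [Hi [L [H E]]]. split; auto. eexists; split; [|rewrite E; apply Aeval_winv].
  apply Forall_rev, Forall_map. eapply Forall_impl; [|exact H]. simpl; auto. Qed.

Lemma Aeval_conj i L g : wconj (Aeval i L) g =~ Aeval i (map (fun p => (fst p, snd p ++ g)) L).
Proof.
  induction L as [|[b h] L IH]; simpl.
  - unfold wconj; simpl; apply inv_l.
  - rewrite <- IH. unfold wconj. rewrite !winv_app. grp.
Qed.
Lemma inA_conj i a g : inA i a -> in_RF m g -> inA i (wconj a g).
Proof. intros [Hi [L [H E]]] Hg. split; auto. eexists; split; [|rewrite E; apply Aeval_conj].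
  apply Forall_map. eapply Forall_impl; [|exact H]. simpl; intros; apply in_RF_app; auto. Qed.

Lemma inA_comm_l i a g : inA i a -> in_RF m g -> inA i (wcomm a g).
Proof. intros Ha Hg. assert (E : wcomm a g =~ winv a ++ wconj a g) by grp. rewrite E.
  apply inA_app; [apply inA_winv; auto|apply inA_conj; auto]. Qed.
Lemma inA_comm_r i a b : i < m -> in_RF m a -> wcomm a [(i,b)] = wconj [(i, negb b)] a ++ [(i,b)].
Proof. intros. unfold wcomm, wconj. change (winv [(i,b)]) with [(i,negb b)]. rewrite <- !app_assoc. reflexivity. Qed.
Lemma inA_comm_letter i a b : i < m -> in_RF m a -> inA i (wcomm a [(i,b)]).
Proof. intros Hi Ha. rewrite inA_comm_r by auto. apply inA_app; [apply inA_conj; auto|]; apply inA_letter; auto. Qed.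

End A.


Definition entry := (bool * nat * list (nat*bool))%type.

Fixpoint tofs (nb : nat) (P : list (nat*bool)) (l : list (nat*bool)) : list entry * list (nat*bool) :=
  match l with
  | [] => ([], P)
  | x :: l' => if fst x <? nb then let r := tofs nb P l' in ((snd x, fst x, P) :: fst r, snd r)
               else tofs nb (P ++ [x]) l'
  end.

Definition opp (e : entry) : entry := (negb (fst (fst e)), snd (fst e), snd e).
Definition nE (e : entry) : entry := (fst e, red (snd e)).
Definition entry_eqb (a b : entry) : bool :=
  Bool.eqb (fst (fst a)) (fst (fst b)) && Nat.eqb (snd (fst a)) (snd (fst b)) && leqb (snd a) (snd b).
Lemma entry_eqb_eq a b : entry_eqb a b = true -> a = b.
Proof. destruct a as [[b1 k1] P1], b as [[b2 k2] P2]. unfold entry_eqb; simpl.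
  intro H. apply andb_true_iff in H as [H H3]. apply andb_true_iff in H as [H1 H2].
  apply eqb_prop in H1; apply Nat.eqb_eq in H2; apply leqb_eq in H3; subst; reflexivity. Qed.

Fixpoint rem1 (y : entry) (l : list entry) : option (list entry) :=
  match l with
  | [] => None
  | x :: l' => if entry_eqb y x then Some l' else
               match rem1 y l' with Some r => Some (x :: r) | None => None end
  end.
Lemma rem1_spec y l l' : rem1 y l = Some l' -> exists l1 l2, l = l1 ++ y :: l2 /\ l' = l1 ++ l2.
Proof.
  revert l'; induction l as [|x l IH]; simpl; intros l' H; [discriminate|].
  destruct (entry_eqb y x) eqn:E.
  - apply entry_eqb_eq in E; subst. injection H as <-. exists [], l; auto.
  - destruct (rem1 y l) as [r|] eqn:R; [|discriminate]. injection H as <-.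
    destruct (IH r eq_refl) as [l1 [l2 [-> ->]]]. exists (x :: l1), l2; auto.
Qed.

Fixpoint cc (n : nat) (l : list entry) : bool :=
  match l with
  | [] => true
  | x :: t => match n with
              | 0 => false
              | S n' => match rem1 (opp x) t with Some t' => cc n' t' | None => false end
              end
  end.

Definition check nb t1 t2 :=
  let r1 := tofs nb [] (flat t1) in let r2 := tofs nb [] (flat t2) in
  let l := map nE (fst r1 ++ map opp (rev (fst r2))) in
  cc (length l) l && leqb (red (snd r1)) (red (snd r2)).

Section S3.
Variable m : nat.
Infix "=~" := (rf_eq m) (at level 70).

Definition evE env (e : entry) : word :=
  evalL env (snd e) ++ evA env (snd (fst e), fst (fst e)) ++ winv (evalL env (snd e)).

Lemma tofs_sound env nb P l :
  evalL env P ++ evalL env l =~ flat_map (evE env) (fst (tofs nb P l)) ++ evalL env (snd (tofs nb P l)).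
Proof.
  revert P; induction l as [|x l IH]; intro P; simpl.
  - unfold evalL at 2; simpl. rewrite app_nil_r. reflexivity.
  - destruct (fst x <? nb).
    + simpl. rewrite <- app_assoc, <- IH. unfold evE. destruct x as [k b]; simpl.
      unfold evalL at 2; simpl. fold (evalL env l).
      rewrite <- !app_assoc, (app_assoc (winv _)), inv_l. reflexivity.
    + rewrite <- IH, evalL_app, <- app_assoc. unfold evalL at 3 4; simpl. rewrite app_nil_r. reflexivity.
Qed.

Lemma push_forall (Q : nat*bool -> Prop) x r : Q x -> Forall Q r -> Forall Q (push x r).
Proof. intros Hx Hr. destruct r as [|y r]; simpl; [repeat constructor; auto|].
  destruct (_ && _); [inversion Hr; auto|constructor; auto]. Qed.
Lemma red_forall (Q : nat*bool -> Prop) l : Forall Q l -> Forall Q (red l).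
Proof. induction 1; simpl; [constructor|apply push_forall; auto]. Qed.

Lemma tofs_P nb P l : Forall (fun x => nb <= fst x) P ->
  Forall (fun e => Forall (fun x => nb <= fst x) (snd e)) (fst (tofs nb P l)).
Proof.
  revert P; induction l as [|x l IH]; intros P HP; simpl; [constructor|].
  destruct (fst x <? nb) eqn:E; simpl.
  - constructor; auto.
  - apply IH. apply Forall_app; split; auto. constructor; auto. apply Nat.ltb_ge in E; auto.
Qed.

Lemma evalL_inRF env nb P : (forall k, nb <= k -> in_RF m (nth k env [])) ->
  Forall (fun x => nb <= fst x) P -> in_RF m (evalL env P).
Proof.
  intros H HP. induction HP as [|[k b] P Hk HP IH]; [apply in_RF_nil|].
  unfold evalL; simpl. apply in_RF_app; auto. unfold evA; simpl. destruct b; auto using in_RF_winv.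
Qed.

Lemma evE_inA env nb i e : (forall k, k < nb -> inA m i (nth k env [])) ->
  (forall k, nb <= k -> in_RF m (nth k env [])) ->
  snd (fst e) < nb -> Forall (fun x => nb <= fst x) (snd e) -> inA m i (evE env e).
Proof.
  intros Hb Hf Hk HP. unfold evE.
  assert (E : evalL env (snd e) ++ evA env (snd (fst e), fst (fst e)) ++ winv (evalL env (snd e))
              = wconj (evA env (snd (fst e), fst (fst e))) (winv (evalL env (snd e)))).
  { unfold wconj. rewrite winv_winv. reflexivity. }
  rewrite E. apply inA_conj; [|apply in_RF_winv; eapply evalL_inRF; eauto].
  unfold evA; simpl. destruct (fst (fst e)); auto using inA_winv.
Qed.

Lemma cc_sound env i n l : Forall (fun e => inA m i (evE env e)) l -> cc n l = true ->
  flat_map (evE env) l =~ [].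
Proof.
  revert l; induction n as [|n IH]; intros l Hl Hc; destruct l as [|x t]; simpl in *; try discriminate; try reflexivity.
  destruct (rem1 (opp x) t) as [t'|] eqn:R; [|discriminate].
  destruct (rem1_spec _ _ _ R) as [l1 [l2 [-> ->]]].
  inversion Hl as [|? ? Hx Ht]; subst.
  apply Forall_app in Ht as [H1 H2]. inversion H2 as [|? ? Ho H2']; subst.
  rewrite flat_map_app. simpl.
  assert (C : commute m (evE env x) (flat_map (evE env) l1)).
  { clear - Hx H1. induction H1; simpl; [apply commute_nil_r|]. apply commute_app_r; auto.
    apply inA_commute with i; auto. }
  unfold commute in C. rewrite app_assoc, C, <- app_assoc, (app_assoc (evE env x)).
  assert (E : evE env x ++ evE env (opp x) =~ []).
  { unfold evE, opp; destruct x as [[b k] P]; simpl. destruct b; unfold evA; simpl; grp. }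
  rewrite E. simpl. rewrite <- flat_map_app. apply IH; auto. apply Forall_app; auto.
Qed.

Lemma opp_rev env l : flat_map (evE env) (map opp (rev l)) =~ winv (flat_map (evE env) l).
Proof.
  induction l as [|x l IH]; simpl; [reflexivity|].
  rewrite map_app, flat_map_app, IH, winv_app. simpl. rewrite app_nil_r.
  apply app_Proper; [reflexivity|]. unfold evE, opp; destruct x as [[b k] P]; simpl.
  destruct b; unfold evA; simpl; grp.
Qed.

Lemma nE_sound env l : flat_map (evE env) (map nE l) =~ flat_map (evE env) l.
Proof.
  induction l as [|x l IH]; simpl; [reflexivity|]. rewrite IH. unfold evE, nE; simpl.
  rewrite red_sound. reflexivity.
Qed.

Lemma abel_sound (base oth : list word) i t1 t2 :
  Forall (inA m i) base -> Forall (in_RF m) oth -> check (length base) t1 t2 = true ->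
  evalT (base ++ oth) t1 =~ evalT (base ++ oth) t2.
Proof.
  intros Hb Ho Hc. set (env := base ++ oth). set (nb := length base).
  assert (HB : forall k, k < nb -> inA m i (nth k env [])).
  { intros k Hk. unfold env. rewrite app_nth1 by auto. apply (proj1 (Forall_nth _ _) Hb); auto. }
  assert (HF : forall k, nb <= k -> in_RF m (nth k env [])).
  { intros k Hk. unfold env. rewrite app_nth2 by auto.
    destruct (lt_dec (k - nb) (length oth)).
    - apply (proj1 (Forall_nth _ _) Ho); auto.
    - rewrite nth_overflow by lia. apply in_RF_nil. }
  unfold check in Hc. fold nb in Hc.
  apply andb_true_iff in Hc as [Hc Hu]. apply leqb_eq in Hu.
  rewrite !evalT_flat.
  assert (S1 := tofs_sound env nb [] (flat t1)). assert (S2 := tofs_sound env nb [] (flat t2)).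
  change (evalL env []) with (@nil letter) in S1, S2. rewrite app_nil_l in S1, S2.
  rewrite S1, S2. rewrite <- (red_sound m env (snd (tofs nb [] (flat t1)))), Hu, red_sound.
  apply app_Proper; [|reflexivity].
  set (f1 := fst (tofs nb [] (flat t1))) in *. set (f2 := fst (tofs nb [] (flat t2))) in *.
  assert (P1 := tofs_P nb [] (flat t1) (Forall_nil _)). assert (P2 := tofs_P nb [] (flat t2) (Forall_nil _)).
  fold f1 in P1. fold f2 in P2.
  assert (K1 : forall f P l, tofs nb P l = f -> Forall (fun e => snd (fst e) < nb) (fst f)).
  { intros f P l; revert P f; induction l as [|x l IH]; intros P f Hf; subst; simpl; [constructor|].
    destruct (fst x <? nb) eqn:E; simpl; [constructor; [apply Nat.ltb_lt; auto|]|]; eapply IH; reflexivity. }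
  assert (Q1 := K1 _ _ _ (eq_refl (tofs nb [] (flat t1)))). assert (Q2 := K1 _ _ _ (eq_refl (tofs nb [] (flat t2)))).
  fold f1 in Q1. fold f2 in Q2.
  assert (Hall : Forall (fun e => inA m i (evE env e)) (map nE (f1 ++ map opp (rev f2)))).
  { apply Forall_map. apply Forall_app; split.
    - rewrite Forall_forall in *. intros e He. apply evE_inA with nb; [exact HB|exact HF|unfold nE; simpl; auto|].
      unfold nE; simpl. apply red_forall; auto.
    - apply Forall_map. apply Forall_rev. rewrite Forall_forall in *. intros e He.
      apply evE_inA with nb; [exact HB|exact HF|unfold nE, opp; simpl; auto|].
      unfold nE, opp; simpl. apply red_forall; auto. }
  assert (Z := cc_sound env i _ _ Hall Hc).
  rewrite nE_sound, flat_map_app, opp_rev in Z.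
  transitivity ((flat_map (evE env) f1 ++ winv (flat_map (evE env) f2)) ++ flat_map (evE env) f2); [|rewrite Z; reflexivity].
  rewrite <- app_assoc, inv_l, app_nil_r. reflexivity.
Qed.

End S3.

Create HintDb rfdb.
Global Hint Resolve in_RF_app in_RF_nil in_RF_winv in_RF_gen in_RF_letter in_RF_wcomm in_RF_wconj in_RF_cons in_RF_wpow : rfdb.
Global Hint Resolve inA_gen inA_letter inA_winv inA_app inA_nil : rfdb.
Global Hint Extern 1 (_ < _) => (simpl; lia) : rfdb.
Ltac side_list := match goal with
  | |- Forall _ [] => apply Forall_nil
  | |- Forall _ (_ :: _) => apply Forall_cons; [first [assumption | solve [auto with rfdb]] | side_list] end.
Ltac abel i base :=
  prep; grp_core base;
  apply (abel_sound _ base _ i); [side_list | side_list | vm_compute; reflexivity].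

Section Test.
Variable m : nat.
Infix "=~" := (rf_eq m) (at level 70).
Lemma test_hom i u v g : inA m i u -> inA m i v -> in_RF m g -> wcomm (u ++ v) g =~ wcomm u g ++ wcomm v g.
Proof. intros. abel i [u; v]. Qed.
End Test.


Definition cstep (acc : word) (y : letter) := wcomm acc [y].
Definition tm (s : list letter) : word :=
  match s with [] => [] | a :: ys => fold_left cstep ys [a] end.
Definition sgn (b : bool) (w : word) := if b then winv w else w.
Definition qeval (L : list (bool * list letter)) := flat_map (fun p => sgn (fst p) (tm (snd p))) L.

Lemma tm_app s t : s <> [] -> tm (s ++ t) = fold_left cstep t (tm s).
Proof. destruct s; [congruence|]. intros _. simpl. apply fold_left_app. Qed.
Lemma tm_snoc s y : s <> [] -> tm (s ++ [y]) = wcomm (tm s) [y].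
Proof. intro H. rewrite tm_app by auto. reflexivity. Qed.

Section Q.
Variable m : nat.
Infix "=~" := (rf_eq m) (at level 70).

Global Instance sgn_Proper b : Proper (rf_eq m ==> rf_eq m) (sgn b).
Proof. intros x y H; destruct b; simpl; rewrite H; reflexivity. Qed.

Lemma in_RF_fold s acc : in_RF m s -> in_RF m acc -> in_RF m (fold_left cstep s acc).
Proof. revert acc; induction s as [|y s IH]; intros acc Hs Ha; simpl; auto.
  inversion Hs; subst. apply IH; auto. unfold cstep. apply in_RF_wcomm; auto. apply in_RF_cons; auto. apply in_RF_nil. Qed.
Lemma in_RF_tm s : in_RF m s -> in_RF m (tm s).
Proof. destruct s as [|a s]; simpl; intro H; [apply in_RF_nil|]. inversion H; subst.
  apply in_RF_fold; auto. apply in_RF_cons; auto. apply in_RF_nil. Qed.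
Lemma in_RF_sgn b w : in_RF m w -> in_RF m (sgn b w).
Proof. destruct b; simpl; auto using in_RF_winv. Qed.

Definition Qok r (L : list (bool * list letter)) := Forall (fun p => r <= length (snd p) /\ in_RF m (snd p)) L.
Definition inQ r w := exists L, Qok r L /\ w =~ qeval L.

Lemma in_RF_qeval r L : Qok r L -> in_RF m (qeval L).
Proof. induction 1 as [|[b s] L [_ Hs] _ IH]; simpl; [apply in_RF_nil|]. apply in_RF_app; auto.
  apply in_RF_sgn, in_RF_tm; auto. Qed.

Global Instance inQ_Proper r : Proper (rf_eq m ==> iff) (inQ r).
Proof. intros a b H; unfold inQ; split; intros [L [HL E]]; exists L; split; auto; [rewrite <- H|rewrite H]; auto. Qed.

Lemma qeval_app a b : qeval (a ++ b) = qeval a ++ qeval b.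
Proof. apply flat_map_app. Qed.

Lemma inQ_nil r : inQ r [].
Proof. exists []; split; [constructor|reflexivity]. Qed.
Lemma inQ_app r a b : inQ r a -> inQ r b -> inQ r (a ++ b).
Proof. intros [L1 [H1 E1]] [L2 [H2 E2]]. exists (L1 ++ L2); split; [apply Forall_app; auto|].
  rewrite qeval_app, E1, E2; reflexivity. Qed.
Lemma inQ_winv r a : inQ r a -> inQ r (winv a).
Proof. intros [L [H E]]. exists (rev (map (fun p => (negb (fst p), snd p)) L)). split.
  - apply Forall_rev, Forall_map. eapply Forall_impl; [|exact H]. simpl; auto.
  - rewrite E. clear. induction L as [|[b s] L IH]; [reflexivity|].
    simpl. rewrite qeval_app, winv_app, IH. apply app_Proper; [reflexivity|].
    unfold qeval; simpl. rewrite app_nil_r. destruct b; simpl; rewrite ?winv_winv; reflexivity.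
Qed.
Lemma inQ_mono r r' a : r' <= r -> inQ r a -> inQ r' a.
Proof. intros Hr [L [H E]]. exists L; split; auto. eapply Forall_impl; [|exact H]. simpl; intros p [H1 H2]; split; auto; lia. Qed.
Lemma inQ_tm r s : r <= length s -> in_RF m s -> inQ r (tm s).
Proof. intros. exists [(false, s)]. split; [repeat constructor; auto|]. unfold qeval; simpl. rewrite app_nil_r; reflexivity. Qed.
Lemma inQ_sgn r b a : inQ r a -> inQ r (sgn b a).
Proof. destruct b; simpl; auto using inQ_winv. Qed.

Lemma conj_letter_split r s y : r <= length s -> in_RF m s -> fst y < m ->
  exists e, inQ (S r) e /\ wconj (tm s) [y] =~ tm s ++ e.
Proof.
  intros Hr Hs Hy. destruct s as [|a s'].
  - exists []. split; [apply inQ_nil|]. simpl. grp.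
  - exists (tm ((a :: s') ++ [y])). split.
    + apply inQ_tm; [rewrite length_app; simpl in *; lia|]. apply in_RF_app; [exact Hs|constructor; [exact Hy|constructor]].
    + rewrite tm_snoc by congruence. grp.
Qed.

Lemma inQ_conj_letter r a y : inQ r a -> fst y < m -> inQ r (wconj a [y]).
Proof.
  intros [L [HL E]] Hy. rewrite E. clear a E. induction HL as [|[b s] L [Hr Hs] HL IH]; simpl.
  - assert (E : wconj [] [y] =~ []) by grp. simpl; rewrite E. apply inQ_nil.
  - destruct (conj_letter_split r s y Hr Hs Hy) as [e1 [He1 E1]].
    assert (EQ : wconj (sgn b (tm s) ++ qeval L) [y] =~ sgn b (wconj (tm s) [y]) ++ wconj (qeval L) [y]) by (destruct b; unfold sgn; grp).
    rewrite EQ. apply inQ_app; auto. apply inQ_sgn. rewrite E1. apply inQ_app; [apply inQ_tm; auto|].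
    apply inQ_mono with (S r); auto.
Qed.

Lemma inQ_conj r a g : inQ r a -> in_RF m g -> inQ r (wconj a g).
Proof.
  revert a; induction g as [|y g IH]; intros a Ha Hg.
  - unfold wconj; simpl. rewrite app_nil_r. auto.
  - inversion Hg; subst. assert (E : wconj a (y :: g) =~ wconj (wconj a [y]) g) by (change (y :: g) with ([y] ++ g); grp).
    rewrite E. apply IH; auto. apply inQ_conj_letter; auto.
Qed.

Lemma conj_split_letter r a y : inQ r a -> fst y < m -> exists e, inQ (S r) e /\ wconj a [y] =~ a ++ e.
Proof.
  intros [L [HL E]] Hy.
  enough (exists e, inQ (S r) e /\ wconj (qeval L) [y] =~ qeval L ++ e) as [e [He E']]
    by (exists e; split; auto; rewrite E; auto).
  clear a E. induction HL as [|[b s] L [Hr Hs] HL IH]; simpl.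
  - exists []; split; [apply inQ_nil|]. simpl. grp.
  - destruct IH as [e2 [He2 E2]].
    destruct (conj_letter_split r s y Hr Hs Hy) as [e1 [He1 E1]].
    assert (HQ : in_RF m (qeval L)) by (eapply in_RF_qeval; eauto).
    set (t := tm s) in *. set (q := qeval L) in *.
    assert (EQ : wconj (sgn b t ++ q) [y] =~ wconj (sgn b t) [y] ++ wconj q [y]) by grp.
    destruct b; unfold sgn in *.
    + assert (EQ2 : wconj (winv t) [y] =~ winv (wconj t [y])) by grp.
      exists (wconj (wconj (winv e1) (winv t)) q ++ e2). split.
      * apply inQ_app; auto. apply inQ_conj; auto. apply inQ_conj; [apply inQ_winv; auto|].
        apply in_RF_winv, in_RF_tm; auto.
      * rewrite EQ, E2, EQ2, E1. grp.
    + exists (wconj e1 q ++ e2). split; [apply inQ_app; auto; apply inQ_conj; auto|].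
      rewrite EQ, E2, E1. grp.
Qed.

Lemma conj_split r a g : inQ r a -> in_RF m g -> exists e, inQ (S r) e /\ wconj a g =~ a ++ e.
Proof.
  revert a; induction g as [|y g IH]; intros a Ha Hg.
  - exists []; split; [apply inQ_nil|]. unfold wconj; simpl. rewrite !app_nil_r. reflexivity.
  - inversion Hg; subst. destruct (conj_split_letter r a y Ha H1) as [e1 [He1 E1]].
    destruct (IH a Ha H2) as [e2 [He2 E2]].
    assert (E : wconj a (y :: g) =~ wconj (wconj a [y]) g) by (change (y :: g) with ([y] ++ g); grp).
    exists (e2 ++ wconj e1 g). split; [apply inQ_app; auto; apply inQ_conj; auto|].
    rewrite E, E1. rewrite app_assoc, <- E2. grp.
Qed.

Lemma inQ_comm r a g : inQ r a -> in_RF m g -> inQ (S r) (wcomm a g).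
Proof.
  intros Ha Hg. destruct (conj_split r a g Ha Hg) as [e [He E]].
  assert (E2 : wcomm a g =~ winv a ++ wconj a g) by grp. rewrite E2, E. 
  rewrite app_assoc, inv_l. exact He.
Qed.

Lemma inQ_comm' r a g : inQ r a -> in_RF m g -> inQ (S r) (wcomm g a).
Proof.
  intros Ha Hg. assert (E : wcomm g a = winv (wcomm a g)).
  { unfold wcomm. rewrite !winv_app, !winv_winv, <- !app_assoc. reflexivity. }
  rewrite E. apply inQ_winv, inQ_comm; auto.
Qed.

End Q.


Section T5.
Variable m : nat.
Infix "=~" := (rf_eq m) (at level 70).

Lemma fold_inA t acc i : i < m -> in_RF m acc -> in_RF m t ->
  (inA m i acc \/ exists y, In y t /\ fst y = i) -> inA m i (fold_left cstep t acc).
Proof.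
  revert acc; induction t as [|y t IH]; intros acc Hi Ha Ht H; simpl.
  - destruct H as [H|[y [[] _]]]; auto.
  - inversion Ht; subst. apply IH; auto.
    + unfold cstep. apply in_RF_wcomm; auto. constructor; auto.
    + destruct H as [H|[y' [[<-|Hy'] Hf]]].
      * left. unfold cstep. apply inA_comm_l; auto. constructor; auto; constructor.
      * left. unfold cstep. destruct y as [k b]; simpl in *; subst. apply inA_comm_letter; auto.
      * right. exists y'; auto.
Qed.

Lemma tm_inA s y : in_RF m s -> In y s -> inA m (fst y) (tm s).
Proof.
  destruct s as [|a t]; [intros _ []|]. intros Hs Hy. inversion Hs; subst. simpl.
  apply fold_inA; auto.
  - unfold in_RF in Hs. rewrite Forall_forall in Hs. apply Hs; auto.
  - constructor; auto; constructor.
  - destruct Hy as [<-|Hy].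
    + left. destruct a as [k b]; apply inA_letter; auto.
    + right. exists y; auto.
Qed.

Lemma fold_nil_eqv t acc : acc =~ [] -> fold_left cstep t acc =~ [].
Proof.
  revert acc; induction t as [|y t IH]; intros acc H; simpl; auto.
  apply IH. unfold cstep. rewrite H. grp.
Qed.

Lemma tm_repeat s1 y1 s2 y2 s3 : in_RF m (s1 ++ y1 :: s2 ++ y2 :: s3) -> fst y1 = fst y2 ->
  tm (s1 ++ y1 :: s2 ++ y2 :: s3) =~ [].
Proof.
  intros Hs Hf.
  assert (E : s1 ++ y1 :: s2 ++ y2 :: s3 = (s1 ++ y1 :: s2) ++ y2 :: s3) by (rewrite <- app_assoc; reflexivity).
  rewrite E in *. rewrite tm_app by (destruct s1; discriminate). simpl.
  apply fold_nil_eqv. unfold cstep.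
  unfold in_RF in Hs; apply Forall_app in Hs as [H1 H2].
  assert (A1 : inA m (fst y1) (tm (s1 ++ y1 :: s2))) by (apply tm_inA; auto; apply in_or_app; right; left; auto).
  assert (A2 : inA m (fst y1) [y2]).
  { inversion H2; subst. rewrite Hf. destruct y2 as [k b]. apply inA_letter; auto. }
  apply commute_triv. apply inA_commute with (fst y1); auto.
Qed.

Lemma pig_dup (s : list letter) : ~ NoDup (map fst s) ->
  exists s1 y1 s2 y2 s3, s = s1 ++ y1 :: s2 ++ y2 :: s3 /\ fst y1 = fst y2.
Proof.
  induction s as [|y t IH]; simpl; intro H; [exfalso; apply H; constructor|].
  destruct (in_dec Nat.eq_dec (fst y) (map fst t)) as [Hin|Hn].
  - apply in_map_iff in Hin as [y2 [Hf Hy2]]. apply in_split in Hy2 as [s2 [s3 ->]].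
    exists [], y, s2, y2, s3. auto.
  - destruct IH as [s1 [y1 [s2 [y2 [s3 [-> Hf]]]]]].
    + intro Hd. apply H. constructor; auto.
    + exists (y :: s1), y1, s2, y2, s3. auto.
Qed.

Lemma tm_long s : in_RF m s -> m < length s -> tm s =~ [].
Proof.
  intros Hs Hl.
  assert (ND : ~ NoDup (map fst s)).
  { intro Hd. apply (NoDup_incl_length (l' := seq 0 m)) in Hd.
    - rewrite length_map, length_seq in Hd. unfold letter in *; lia.
    - intros x Hx. apply in_map_iff in Hx as [y [<- Hy]]. apply in_seq.
      unfold in_RF in Hs; rewrite Forall_forall in Hs. specialize (Hs y Hy). lia. }
  destruct (pig_dup s ND) as [s1 [y1 [s2 [y2 [s3 [-> Hf]]]]]].
  apply tm_repeat; auto.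
Qed.

Lemma Q_top a : inQ m (S m) a -> a =~ [].
Proof.
  intros [L [HL E]]. rewrite E. clear E. induction HL as [|[b s] L [Hr Hs] HL IH]; simpl; [reflexivity|].
  rewrite IH, app_nil_r. simpl in *. rewrite tm_long by (auto; lia). destruct b; reflexivity.
Qed.

End T5.


Section T6.
Variable m : nat.
Infix "=~" := (rf_eq m) (at level 70).

Lemma tm_single y : tm [y] = [y].
Proof. reflexivity. Qed.

Lemma Ecl i v : v <> [] -> in_RF m v -> forall a u, inA m i u -> inQ m a u ->
  inQ m (a + length v) (wcomm u (tm v)).
Proof.
  induction v as [|y v0 IH] using rev_ind; [congruence|]. intros _ Hv a u Hu Hq.
  unfold in_RF in Hv; apply Forall_app in Hv as [Hv0 Hy]. inversion Hy as [|? ? Hy1 _]; subst.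
  assert (HY : in_RF m [y]) by (constructor; auto; constructor).
  destruct v0 as [|z v0'].
  - simpl. replace (a + 1) with (S a) by lia. apply inQ_comm; auto.
  - set (v0 := z :: v0') in *. assert (Hne : v0 <> []) by (unfold v0; congruence).
    rewrite tm_snoc by auto. rewrite length_app. change (length [y]) with 1.
    assert (HV : in_RF m (tm v0)) by (apply in_RF_tm; auto).
    set (V := tm v0) in *. pose (Y := [y]). change [y] with Y in HY |- *.
    set (u' := wconj u (winv V ++ winv Y)).
    assert (Hi : i < m) by (destruct Hu; auto).
    assert (E : wcomm u (wcomm V Y) =~ wcomm (wcomm u' V) Y ++ winv (wcomm (wcomm u' Y) V)).
    { unfold u'. abel i [u]. }
    rewrite E.
    assert (Hu' : inA m i u') by (apply inA_conj; auto; apply in_RF_app; apply in_RF_winv; auto).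
    assert (Hq' : inQ m a u') by (apply inQ_conj; auto; apply in_RF_app; apply in_RF_winv; auto).
    apply inQ_app.
    + replace (a + (length v0 + 1)) with (S (a + length v0)) by lia. apply inQ_comm; auto.
    + apply inQ_winv. replace (a + (length v0 + 1)) with (S a + length v0) by lia.
      apply IH; auto. apply inA_comm_l; auto. apply inQ_comm; auto.
Qed.

Lemma inQ_qeval_len r L : Forall (fun p => length (snd p) = r /\ in_RF m (snd p)) L -> inQ m r (qeval L).
Proof. intro H. exists L. split; [|reflexivity]. eapply Forall_impl; [|exact H]. simpl; intros p [H1 H2]; split; auto; lia. Qed.

Lemma qeval_winv L : winv (qeval L) =~ qeval (rev (map (fun p => (negb (fst p), snd p)) L)).
Proof.
  induction L as [|[b s] L IH]; [reflexivity|].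
  simpl. rewrite qeval_app, winv_app, IH. apply app_Proper; [reflexivity|].
  unfold qeval; simpl. rewrite app_nil_r. destruct b; simpl; rewrite ?winv_winv; reflexivity.
Qed.

Definition Mok i n (L : list (bool * list letter)) :=
  Forall (fun p => length (snd p) = n /\ in_RF m (snd p) /\ exists b s', snd p = (i,b) :: s') L.
Definition MSpan i n w := exists L e, Mok i n L /\ inA m i e /\ inQ m (S n) e /\ w =~ qeval L ++ e.

Lemma Mok_inA i n L : i < m -> Mok i n L -> inA m i (qeval L).
Proof.
  intros Hi H. induction H as [|[b s] L [H1 [H2 [b' [s' Hs]]]] _ IH]; [apply inA_nil; auto|].
  change (qeval ((b,s)::L)) with (sgn b (tm s) ++ qeval L). apply inA_app; auto.
  cbn [snd] in *. subst s. destruct b; unfold sgn; [apply inA_winv|];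
  apply (tm_inA m _ (i,b')); auto; left; auto.
Qed.
Lemma Mok_inRF i n L : Mok i n L -> in_RF m (qeval L).
Proof. intro H. apply (in_RF_qeval m 0). eapply Forall_impl; [|exact H]. simpl. intros p [_ [Hp _]]; split; auto; lia. Qed.
Lemma Mok_inQ i n L : Mok i n L -> inQ m n (qeval L).
Proof. intro H. apply inQ_qeval_len. eapply Forall_impl; [|exact H]. simpl. intros p [H1 [H2 _]]; auto. Qed.

Lemma MSpan_inA i n w : i < m -> MSpan i n w -> inA m i w.
Proof. intros Hi [L [e [HL [He [_ E]]]]]. rewrite E. apply inA_app; auto. apply Mok_inA with n; auto. Qed.
Lemma MSpan_inQ i n w : MSpan i n w -> inQ m n w.
Proof. intros [L [e [HL [He [Hq E]]]]]. rewrite E. apply inQ_app; [apply Mok_inQ with i; auto|].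
  apply inQ_mono with (S n); auto. Qed.

Global Instance MSpan_Proper i n : Proper (rf_eq m ==> iff) (MSpan i n).
Proof. intros a b H; unfold MSpan; split; intros [L [e [H1 [H2 [H3 E]]]]]; exists L, e; (split; [auto|split; [auto|split; [auto|]]]).
  - rewrite <- H; auto.
  - rewrite H; auto. Qed.

Lemma MSpan_err i n e : i < m -> inA m i e -> inQ m (S n) e -> MSpan i n e.
Proof. intros. exists [], e. split; [constructor|]. split; [auto|split; [auto|reflexivity]]. Qed.

Lemma MSpan_app i n a b : i < m -> MSpan i n a -> MSpan i n b -> MSpan i n (a ++ b).
Proof.
  intros Hi [L1 [e1 [H1 [A1 [Q1 E1]]]]] [L2 [e2 [H2 [A2 [Q2 E2]]]]].
  exists (L1 ++ L2), (e1 ++ e2). split; [|split; [|split]]; [apply Forall_app; auto|apply inA_app; auto|apply inQ_app; auto|].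
  rewrite E1, E2, qeval_app.
  assert (P1 := Mok_inA _ _ _ Hi H1). assert (P2 := Mok_inA _ _ _ Hi H2).
  set (q1 := qeval L1) in *. set (q2 := qeval L2) in *.
  abel i [q1; e1; q2; e2].
Qed.

Lemma MSpan_winv i n a : i < m -> MSpan i n a -> MSpan i n (winv a).
Proof.
  intros Hi [L [e [H1 [A1 [Q1 E1]]]]].
  exists (rev (map (fun p => (negb (fst p), snd p)) L)), (winv e). split; [|split; [|split]].
  - apply Forall_rev, Forall_map. eapply Forall_impl; [|exact H1]. simpl; auto.
  - apply inA_winv; auto.
  - apply inQ_winv; auto.
  - rewrite E1, <- qeval_winv. assert (P1 := Mok_inA _ _ _ Hi H1). set (q := qeval L) in *.
    abel i [q; e].
Qed.

Lemma MSpan_letter i b : i < m -> MSpan i 1 [(i,b)].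
Proof. intro Hi. exists [(false, [(i,b)])], []. split; [|split; [|split]].
  - repeat constructor; auto. exists b, []; auto.
  - apply inA_nil; auto.
  - apply inQ_nil.
  - unfold qeval; simpl. reflexivity.
Qed.

Lemma MSpan_comm_letter i n w y : i < m -> fst y < m -> MSpan i n w -> MSpan i (S n) (wcomm w [y]).
Proof.
  intros Hi Hy [L [e [H1 [A1 [Q1 E1]]]]].
  assert (HY : in_RF m [y]) by (constructor; auto; constructor).
  exists (map (fun p => (fst p, snd p ++ [y])) L), (wcomm e [y]). split; [|split; [|split]].
  - apply Forall_map. eapply Forall_impl; [|exact H1]. simpl. intros [b s] [L1 [L2 [b' [s' Hs]]]]; simpl in *.
    repeat split.
    + rewrite length_app; simpl in *; unfold letter in *; lia.
    + apply in_RF_app; auto.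
    + exists b', (s' ++ [y]). rewrite Hs; reflexivity.
  - apply inA_comm_l; auto.
  - apply inQ_comm; auto.
  - rewrite E1. assert (P1 := Mok_inA _ _ _ Hi H1). set (q := qeval L) in *.
    assert (E : wcomm (q ++ e) [y] =~ wcomm q [y] ++ wcomm e [y]) by abel i [q; e].
    rewrite E. apply app_Proper; [|reflexivity]. unfold q. clear - H1 Hi Hy HY.
    induction H1 as [|[b s] L [L1 [L2 [b' [s' Hs]]]] HL IH]; simpl in *.
    + unfold qeval; simpl. grp.
    + assert (Ht : inA m i (tm s)) by (subst; apply (tm_inA m _ (i,b')); auto; left; auto).
      assert (HQ : inA m i (qeval L)) by (apply Mok_inA with n; auto).
      set (q := qeval L) in *. set (t := tm s) in *.
      assert (E : wcomm (sgn b t ++ q) [y] =~ sgn b (wcomm t [y]) ++ wcomm q [y])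
        by (destruct b; unfold sgn; abel i [t; q]).
      rewrite E, IH. simpl. unfold t. rewrite tm_snoc by (subst; congruence). reflexivity.
Qed.

Lemma MSpan_E i v : i < m -> v <> [] -> in_RF m v -> forall n w, MSpan i n w -> MSpan i (n + length v) (wcomm w (tm v)).
Proof.
  intro Hi.
  induction v as [|y v0 IH] using rev_ind; [congruence|]. intros _ Hv n w Hw.
  unfold in_RF in Hv; apply Forall_app in Hv as [Hv0 Hy]. inversion Hy as [|? ? Hy1 _]; subst.
  assert (HY : in_RF m [y]) by (constructor; auto; constructor).
  destruct v0 as [|z v0'].
  - simpl. replace (n + 1) with (S n) by lia. apply MSpan_comm_letter; auto.
  - set (v0 := z :: v0') in *. assert (Hne : v0 <> []) by (unfold v0; congruence).
    rewrite tm_snoc by auto. rewrite length_app. change (length [y]) with 1.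
    assert (HV : in_RF m (tm v0)) by (apply in_RF_tm; auto).
    set (V := tm v0) in *. pose (Y := [y]). change [y] with Y in HY |- *.
    assert (HwA : inA m i w) by (apply MSpan_inA with n; auto).
    assert (HwQ : inQ m n w) by (apply MSpan_inQ with i; auto).
    set (d := wcomm w (winv V ++ winv Y)).
    assert (E : wcomm w (wcomm V Y) =~ wcomm (wcomm w V) Y ++ wcomm (wcomm d V) Y
                 ++ winv (wcomm (wcomm w Y) V) ++ winv (wcomm (wcomm d Y) V)).
    { unfold d. abel i [w]. }
    rewrite E.
    assert (Hg : in_RF m (winv V ++ winv Y)) by (apply in_RF_app; apply in_RF_winv; auto).
    assert (HdA : inA m i d) by (apply inA_comm_l; auto).
    assert (HdQ : inQ m (S n) d) by (apply inQ_comm; auto).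
    replace (n + (length v0 + 1)) with (S (n + length v0)) by lia.
    apply MSpan_app; [auto| |apply MSpan_app; [auto| |apply MSpan_app; [auto| |]]].
    + apply MSpan_comm_letter; auto.
    + apply MSpan_err; auto.
      * apply inA_comm_l; auto. apply inA_comm_l; auto.
      * apply inQ_comm; auto. replace (S (n + length v0)) with (S n + length v0) by lia.
        apply Ecl with i; auto.
    + apply MSpan_winv; auto. replace (S (n + length v0)) with (S n + length v0) by lia.
      apply IH; auto. apply MSpan_comm_letter; auto.
    + apply MSpan_err; auto.
      * apply inA_winv. apply inA_comm_l; auto. apply inA_comm_l; auto.
      * apply inQ_winv. replace (S (S (n + length v0))) with (S (S n) + length v0) by lia.
        apply Ecl with i; auto. apply inA_comm_l; auto. apply inQ_comm; auto.
Qed.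

End T6.


Definition psi i j c := wcomm (wcomm c (gen i)) (gen j).
Definition kdata := (bool * nat * nat * word)%type.
Definition kb (k : kdata) := fst (fst (fst k)).
Definition ki (k : kdata) := snd (fst (fst k)).
Definition kj (k : kdata) := snd (fst k).
Definition kc (k : kdata) := snd k.
Definition spsi (k : kdata) := sgn (kb k) (psi (ki k) (kj k) (kc k)).
Definition kflip (k : kdata) : kdata := (negb (kb k), ki k, kj k, kc k).

Section T7.
Variable m : nat.
Infix "=~" := (rf_eq m) (at level 70).

Definition Kok r (K : list kdata) :=
  Forall (fun k => ki k < m - 1 /\ kj k < m - 1 /\ in_RF m (kc k) /\ inQ m (r - 2) (kc k)) K.
Definition SpanR r w := exists K e, Kok r K /\ inQ m (S r) e /\ w =~ flat_map spsi K ++ e.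

Lemma in_RF_psi i j c : i < m -> j < m -> in_RF m c -> in_RF m (psi i j c).
Proof. intros; unfold psi; repeat apply in_RF_wcomm; auto using in_RF_gen. Qed.
Lemma psi_inA i j c : i < m -> j < m -> in_RF m c -> inA m i (psi i j c).
Proof. intros. unfold psi. apply inA_comm_l; [|apply in_RF_gen; auto]. apply inA_comm_letter; auto. Qed.
Lemma psi_inQ r i j c : 2 <= r -> i < m -> j < m -> in_RF m c -> inQ m (r - 2) c -> inQ m r (psi i j c).
Proof. intros. unfold psi. replace r with (S (S (r - 2))) by lia. apply inQ_comm; [|apply in_RF_gen; auto].
  apply inQ_comm; auto. apply in_RF_gen; auto. Qed.

Lemma in_RF_K r K : Kok r K -> in_RF m (flat_map spsi K).
Proof. induction 1 as [|k K [H1 [H2 [H3 _]]] _ IH]; simpl; [apply in_RF_nil|]. apply in_RF_app; auto.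
  unfold spsi. apply in_RF_sgn, in_RF_psi; auto; lia. Qed.

Global Instance SpanR_Proper r : Proper (rf_eq m ==> iff) (SpanR r).
Proof. intros a b H; unfold SpanR; split; intros [K [e [H1 [H2 E]]]]; exists K, e; (split; [auto|split; [auto|]]).
  - rewrite <- H; auto.
  - rewrite H; auto. Qed.

Lemma SpanR_Q r e : inQ m (S r) e -> SpanR r e.
Proof. intro. exists [], e. split; [constructor|split; [auto|reflexivity]]. Qed.

Lemma SpanR_app r a b : SpanR r a -> SpanR r b -> SpanR r (a ++ b).
Proof.
  intros [K1 [e1 [H1 [Q1 E1]]]] [K2 [e2 [H2 [Q2 E2]]]].
  exists (K1 ++ K2), (wconj e1 (flat_map spsi K2) ++ e2). split; [apply Forall_app; auto|split].
  - apply inQ_app; auto. apply inQ_conj; auto. eapply in_RF_K; eauto.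
  - rewrite E1, E2, flat_map_app. grp.
Qed.

Lemma flat_map_spsi_winv K : winv (flat_map spsi K) =~ flat_map spsi (rev (map kflip K)).
Proof.
  induction K as [|k K IH]; [reflexivity|]. simpl. rewrite winv_app, IH, flat_map_app. simpl.
  rewrite app_nil_r. apply app_Proper; [reflexivity|]. unfold spsi, kflip, kb, ki, kj, kc; simpl.
  destruct (fst (fst (fst k))); simpl; rewrite ?winv_winv; reflexivity.
Qed.

Lemma SpanR_winv r a : SpanR r a -> SpanR r (winv a).
Proof.
  intros [K [e [H1 [Q1 E1]]]].
  exists (rev (map kflip K)), (wconj (winv e) (winv (flat_map spsi K))). split; [|split].
  - apply Forall_rev, Forall_map. eapply Forall_impl; [|exact H1]. unfold kflip, ki, kj, kc; simpl; auto.
  - apply inQ_conj; [apply inQ_winv; auto|apply in_RF_winv; eapply in_RF_K; eauto].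
  - rewrite E1, <- flat_map_spsi_winv. grp.
Qed.

Lemma tm_two s0 y1 y2 : s0 <> [] -> tm (s0 ++ [y1; y2]) = wcomm (wcomm (tm s0) [y1]) [y2].
Proof. intro H. rewrite tm_app by auto. reflexivity. Qed.

Lemma SpanA r s0 i e1 j e2 : 3 <= r -> s0 <> [] -> length s0 = r - 2 -> in_RF m s0 ->
  i < m - 1 -> j < m - 1 -> SpanR r (tm (s0 ++ [(i,e1); (j,e2)])).
Proof.
  intros Hr Hne Hl Hs Hi Hj. rewrite tm_two by auto.
  assert (Hc : in_RF m (tm s0)) by (apply in_RF_tm; auto).
  assert (Qc : inQ m (r - 2) (tm s0)) by (apply inQ_tm; auto; lia).
  set (c := tm s0) in *.
  assert (Hgi : in_RF m (gen i)) by (apply in_RF_gen; lia).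
  assert (Hgj : in_RF m (gen j)) by (apply in_RF_gen; lia).
  assert (Ai : inA m i (gen i)) by (apply inA_gen; lia).
  assert (Pq : inQ m r (psi i j c)) by (apply psi_inQ; auto; lia).
  assert (Pr : in_RF m (psi i j c)) by (apply in_RF_psi; auto; lia).
  assert (Kk : forall b, Kok r [(b,i,j,c)]) by (intro b; constructor; [|constructor]; unfold ki, kj, kc; simpl; auto).
  assert (ERR : forall X g, inQ m r X -> in_RF m g -> wconj X g =~ X ++ wcomm X g /\ inQ m (S r) (wcomm X g)).
  { intros X g HX Hg. split; [grp|apply inQ_comm; auto]. }
  destruct e1, e2.
  - change [(i,true)] with (winv (gen i)). change [(j,true)] with (winv (gen j)).
    assert (E : wcomm (wcomm c (winv (gen i))) (winv (gen j)) =~ wconj (psi i j c) (winv (gen j)))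
      by (unfold psi; abel i [gen i]).
    destruct (ERR (psi i j c) (winv (gen j)) Pq (in_RF_winv _ _ Hgj)) as [E2 Q2].
    rewrite E, E2. exists [(false,i,j,c)], (wcomm (psi i j c) (winv (gen j))).
    split; [auto|split; [auto|]]. unfold spsi, kb, ki, kj, kc; simpl. rewrite app_nil_r. reflexivity.
  - change [(i,true)] with (winv (gen i)). change [(j,false)] with (gen j).
    assert (E : wcomm (wcomm c (winv (gen i))) (gen j) =~ winv (psi i j c)) by (unfold psi; abel i [gen i]).
    rewrite E. exists [(true,i,j,c)], []. split; [auto|split; [apply inQ_nil|]].
    unfold spsi, kb, ki, kj, kc; simpl. rewrite !app_nil_r. reflexivity.
  - change [(i,false)] with (gen i). change [(j,true)] with (winv (gen j)).
    assert (E : wcomm (wcomm c (gen i)) (winv (gen j)) =~ wconj (winv (psi i j c)) (winv (gen j))) by (unfold psi; grp).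
    destruct (ERR (winv (psi i j c)) (winv (gen j)) (inQ_winv _ _ _ Pq) (in_RF_winv _ _ Hgj)) as [E2 Q2].
    rewrite E, E2. exists [(true,i,j,c)], (wcomm (winv (psi i j c)) (winv (gen j))).
    split; [auto|split; [auto|]]. unfold spsi, kb, ki, kj, kc; simpl. rewrite app_nil_r. reflexivity.
  - change [(i,false)] with (gen i). change [(j,false)] with (gen j).
    exists [(false,i,j,c)], []. split; [auto|split; [apply inQ_nil|]].
    unfold spsi, kb, ki, kj, kc; simpl. rewrite !app_nil_r. reflexivity.
Qed.

Lemma split_last2 (s : list letter) : 3 <= length s -> exists s0 y1 y2, s = s0 ++ [y1; y2] /\ s0 <> [].
Proof.
  intro H. destruct (rev s) as [|y2 [|y1 t]] eqn:E.
  - apply (f_equal (@length _)) in E. rewrite length_rev in E. simpl in E. lia.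
  - apply (f_equal (@length _)) in E. rewrite length_rev in E. simpl in E. lia.
  - exists (rev t), y1, y2. split.
    + rewrite <- (rev_involutive s), E. simpl. rewrite <- app_assoc. reflexivity.
    + intro Ht. apply (f_equal (@rev _)) in Ht. rewrite rev_involutive in Ht. subst t.
      apply (f_equal (@length _)) in E. rewrite length_rev in E. simpl in E. lia.
Qed.

Lemma Mterm_SpanR r b s : 0 < m -> 3 <= r -> length ((m-1,b) :: s) = r -> in_RF m ((m-1,b) :: s) ->
  SpanR r (tm ((m-1,b) :: s)).
Proof.
  intros Hm Hr Hl Hs.
  destruct (split_last2 ((m-1,b)::s)) as [s0 [[i e1] [[j e2] [E Hne]]]]; [simpl in *; unfold letter in *; lia|].
  destruct s0 as [|h s0']; [congruence|]. simpl in E. inversion E; subst h s. clear E.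
  assert (Hs' := Hs). unfold in_RF in Hs'. inversion Hs' as [|? ? _ Ht]; subst.
  apply Forall_app in Ht as [_ Ht]. inversion Ht as [|? ? Hi Ht']; inversion Ht' as [|? ? Hj _]; subst.
  simpl in Hi, Hj.
  destruct (Nat.eq_dec i (m-1)) as [->|Hi'].
  - assert (Z : tm ((m-1,b) :: s0' ++ [(m-1,e1); (j,e2)]) =~ []).
    { apply (tm_repeat m [] (m-1,b) s0' (m-1,e1) [(j,e2)]); [auto|reflexivity]. }
    rewrite Z. apply SpanR_Q, inQ_nil.
  - destruct (Nat.eq_dec j (m-1)) as [->|Hj'].
    + assert (Z : tm ((m-1,b) :: s0' ++ [(i,e1); (m-1,e2)]) =~ []).
      { replace ((m-1,b) :: s0' ++ [(i,e1); (m-1,e2)]) with ([] ++ (m-1,b) :: (s0' ++ [(i,e1)]) ++ (m-1,e2) :: [])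
          by (simpl; rewrite <- app_assoc; reflexivity).
        apply tm_repeat; [|reflexivity]. simpl. rewrite <- app_assoc. simpl. auto. }
      rewrite Z. apply SpanR_Q, inQ_nil.
    + change ((m-1,b) :: s0' ++ [(i,e1); (j,e2)]) with (((m-1,b) :: s0') ++ [(i,e1); (j,e2)]).
      apply SpanA; auto; try lia; try congruence.
      * simpl in *. rewrite ?length_app in *. simpl in *. unfold letter in *; lia.
      * unfold in_RF in Hs |- *. change ((m-1,b) :: s0' ++ [(i,e1); (j,e2)]) with (((m-1,b) :: s0') ++ [(i,e1); (j,e2)]) in Hs.
        apply Forall_app in Hs as [Hs _]; auto.
Qed.

Lemma MSpan_SpanR r w : 0 < m -> 3 <= r -> MSpan m (m-1) r w -> SpanR r w.
Proof.
  intros Hm Hr [L [e [HL [_ [He E]]]]]. rewrite E. apply SpanR_app; [|apply SpanR_Q; auto].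
  clear E. induction HL as [|[b s] L [H1 [H2 [b' [s' Hs]]]] _ IH].
  - apply SpanR_Q, inQ_nil.
  - change (qeval ((b,s)::L)) with (sgn b (tm s) ++ qeval L). apply SpanR_app; auto.
    cbn [snd] in *. subst s. destruct b; unfold sgn; [apply SpanR_winv|]; apply Mterm_SpanR; auto.
Qed.

Lemma term_SpanR r s : 0 < m -> 3 <= r -> length s = r -> in_RF m s -> SpanR r (tm s).
Proof.
  intros Hm Hr Hl Hs.
  destruct (split_last2 s) as [s0 [y1 [y2 [-> Hne]]]]; [rewrite Hl; lia|].
  assert (Hs' := Hs). unfold in_RF in Hs'. apply Forall_app in Hs' as [Hs0 Ht].
  apply Forall_cons_iff in Ht as [Hi Ht']. apply Forall_cons_iff in Ht' as [Hj _].
  rewrite length_app in Hl. simpl in Hl.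
  assert (HY1 : in_RF m [y1]) by (constructor; auto; constructor).
  assert (HY2 : in_RF m [y2]) by (constructor; auto; constructor).
  destruct (Nat.eq_dec (fst y2) (m-1)) as [Ej|Hj'].
  -
    replace (s0 ++ [y1; y2]) with ((s0 ++ [y1]) ++ [y2]) by (rewrite <- app_assoc; reflexivity).
    rewrite tm_snoc by (destruct s0; simpl; congruence).
    assert (E : wcomm (tm (s0 ++ [y1])) [y2] = winv (wcomm [y2] (tm (s0 ++ [y1])))).
    { unfold wcomm. rewrite !winv_app, !winv_winv, <- !app_assoc. reflexivity. }
    rewrite E. apply MSpan_SpanR; auto. apply MSpan_winv; [lia|].
    replace r with (1 + length (s0 ++ [y1])) by (rewrite length_app; simpl; unfold letter in *; lia).
    apply MSpan_E; [lia| destruct s0; simpl; congruence| apply in_RF_app; auto|].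
    destruct y2 as [j e2]; simpl in Ej; subst j. apply MSpan_letter; lia.
  - destruct (Nat.eq_dec (fst y1) (m-1)) as [Ei|Hi'].
    + rewrite tm_two by auto.
      assert (E : wcomm (tm s0) [y1] = winv (wcomm [y1] (tm s0))).
      { unfold wcomm. rewrite !winv_app, !winv_winv, <- !app_assoc. reflexivity. }
      rewrite E. apply MSpan_SpanR; auto.
      replace r with (S (1 + length s0)) by (unfold letter in *; lia).
      apply MSpan_comm_letter; [lia|auto|]. apply MSpan_winv; [lia|].
      apply MSpan_E; [lia|auto|auto|]. destruct y1 as [i e1]; simpl in Ei; subst i. apply MSpan_letter; lia.
    + destruct y1 as [i e1], y2 as [j e2]. simpl in *. apply SpanA; auto; unfold letter in *; lia.
Qed.

End T7.


Definition PL (M : nat) := flat_map (fun i => map (fun j => (i,j)) (seq 0 M)) (seq 0 M).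
Definition upd2 {A} (w : nat -> nat -> A) i j (v : A) :=
  fun i' j' => if (i' =? i) && (j' =? j) then v else w i' j'.

Lemma fm_split {K} (eqd : forall x y : K, {x = y} + {x <> y}) (L : list K) (x : K) (F G : K -> word) :
  NoDup L -> In x L -> (forall y, y <> x -> F y = G y) ->
  exists A B, flat_map F L = A ++ F x ++ B /\ flat_map G L = A ++ G x ++ B.
Proof.
  intros ND Hin H. apply in_split in Hin as [L1 [L2 ->]].
  apply NoDup_remove_2 in ND. rewrite in_app_iff in ND.
  assert (E : forall L0, ~ In x L0 -> flat_map F L0 = flat_map G L0).
  { induction L0 as [|y L0 IH]; simpl; auto. intro Hn. rewrite H, IH; auto. }
  exists (flat_map F L1), (flat_map F L2). rewrite !flat_map_app. simpl. split; [reflexivity|].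
  rewrite (E L1), (E L2); auto.
Qed.

Lemma NoDup_pairs (l1 : list nat) (g : nat -> list nat) : NoDup l1 -> (forall i, NoDup (g i)) ->
  NoDup (flat_map (fun i => map (fun j => (i,j)) (g i)) l1).
Proof.
  intros H1 H2. induction H1 as [|i l1 Hi H1 IH]; simpl; [constructor|].
  apply NoDup_app; auto.
  - apply NoDup_map_NoDup_ForallPairs; auto. intros a b _ _ E; injection E; auto.
  - intros [a b] Ha Hb. apply in_map_iff in Ha as [j [E _]]. injection E as -> ->.
    apply in_flat_map in Hb as [i' [Hi' Hb]]. apply in_map_iff in Hb as [j' [E _]]. injection E as -> ->. auto.
Qed.

Lemma PL_NoDup M : NoDup (PL M).
Proof. apply NoDup_pairs; intros; apply seq_NoDup. Qed.
Lemma PL_In M i j : i < M -> j < M -> In (i,j) (PL M).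
Proof. intros. unfold PL. apply in_flat_map. exists i. split; [apply in_seq; lia|]. apply in_map_iff. exists j. split; auto. apply in_seq; lia. Qed.

Lemma pair_eq_dec (x y : nat * nat) : {x = y} + {x <> y}.
Proof. decide equality; apply Nat.eq_dec. Qed.

Section T8.
Variable m : nat.
Infix "=~" := (rf_eq m) (at level 70).

Definition Pw (w : nat -> nat -> word) := flat_map (fun p => psi (fst p) (snd p) (w (fst p) (snd p))) (PL (m-1)).
Definition wok (w : nat -> nat -> word) := forall i j, in_RF m (w i j).

Lemma Pw_inRF w : wok w -> in_RF m (Pw w).
Proof.
  intro H. unfold Pw. assert (K : forall p, In p (PL (m-1)) -> fst p < m /\ snd p < m).
  { intros [i j] Hp. unfold PL in Hp. apply in_flat_map in Hp as [i' [Hi Hp]]. apply in_map_iff in Hp as [j' [E Hj]].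
    injection E as -> ->. apply in_seq in Hi, Hj. simpl; lia. }
  induction (PL (m-1)) as [|p l IH]; simpl; [apply in_RF_nil|]. apply in_RF_app.
  - destruct (K p (or_introl eq_refl)). apply in_RF_psi; auto.
  - apply IH. intros; apply K; right; auto.
Qed.

Lemma Pw_split w i j v : i < m - 1 -> j < m - 1 -> exists A B,
  Pw w = A ++ psi i j (w i j) ++ B /\ Pw (upd2 w i j v) = A ++ psi i j v ++ B.
Proof.
  intros Hi Hj. unfold Pw.
  destruct (fm_split pair_eq_dec (PL (m-1)) (i,j) (fun p => psi (fst p) (snd p) (w (fst p) (snd p)))
           (fun p => psi (fst p) (snd p) (upd2 w i j v (fst p) (snd p))) (PL_NoDup _) (PL_In _ _ _ Hi Hj))
    as [A [B [E1 E2]]].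
  - intros [i' j'] Hne. simpl. unfold upd2. destruct (i' =? i) eqn:Ei, (j' =? j) eqn:Ej; simpl; auto.
    apply Nat.eqb_eq in Ei, Ej; subst; congruence.
  - exists A, B. rewrite E1, E2. simpl. unfold upd2. rewrite !Nat.eqb_refl. simpl. auto.
Qed.

Lemma wok_upd w i j v : wok w -> in_RF m v -> wok (upd2 w i j v).
Proof. intros H Hv i' j'. unfold upd2. destruct (_ && _); auto. Qed.

Lemma merge1 r w i j c : 3 <= r -> wok w -> i < m - 1 -> j < m - 1 -> in_RF m c -> inQ m (r - 2) c ->
  exists w' e, wok w' /\ inQ m (S r) e /\ Pw w ++ psi i j c =~ Pw w' ++ e.
Proof.
  intros Hr Hw Hi Hj Hc Qc.
  destruct (Pw_split w i j (c ++ w i j) Hi Hj) as [A [B [E1 E2]]].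
  assert (HB : in_RF m B).
  { assert (H := Pw_inRF w Hw). rewrite E1 in H. unfold in_RF in H. apply Forall_app in H as [_ H].
    apply Forall_app in H as [_ H]. exact H. }
  assert (Hgi : in_RF m (gen i)) by (apply in_RF_gen; lia).
  assert (Hgj : in_RF m (gen j)) by (apply in_RF_gen; lia).
  assert (Hwij := Hw i j).
  set (o := w i j) in *.
  set (Er := wcomm (wcomm (wcomm c (gen i)) o) (gen j)).
  assert (QE : inQ m (S r) Er).
  { unfold Er. replace (S r) with (S (S (S (r - 2)))) by lia. apply inQ_comm; auto. apply inQ_comm; auto. apply inQ_comm; auto. }
  assert (Qp : inQ m r (psi i j c)) by (apply psi_inQ; auto; lia).
  assert (Ai : inA m i (gen i)) by (apply inA_gen; lia).
  assert (K : psi i j o ++ psi i j c =~ psi i j (c ++ o) ++ winv Er) by (unfold psi, Er; abel i [gen i]).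
  exists (upd2 w i j (c ++ o)), (wconj (winv Er) B ++ wcomm B (psi i j c)). split; [|split].
  - apply wok_upd; auto. apply in_RF_app; auto.
  - apply inQ_app; [apply inQ_conj; auto; apply inQ_winv; auto|apply inQ_comm'; auto].
  - rewrite E1, E2. transitivity (A ++ (psi i j o ++ psi i j c) ++ B ++ wcomm B (psi i j c)); [grp|].
    rewrite K. grp.
Qed.

Lemma merge r w k : 3 <= r -> wok w -> Kok m r [k] ->
  exists w' e, wok w' /\ inQ m (S r) e /\ Pw w ++ spsi k =~ Pw w' ++ e.
Proof.
  intros Hr Hw HK. inversion HK as [|? ? [Hi [Hj [Hc Qc]]] _]; subst.
  destruct k as [[[b i] j] c]. unfold ki, kj, kc in *; simpl in *. unfold spsi, kb, ki, kj, kc; simpl.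
  destruct b; simpl.
  - assert (Hgi : in_RF m (gen i)) by (apply in_RF_gen; lia).
    assert (Hgj : in_RF m (gen j)) by (apply in_RF_gen; lia).
    assert (Ai : inA m i (gen i)) by (apply inA_gen; lia).
    set (F := winv (wcomm (wcomm (winv (wcomm c (gen i))) (winv c)) (gen j))).
    assert (K : winv (psi i j c) =~ psi i j (winv c) ++ F) by (unfold psi, F; abel i [gen i]).
    assert (QF : inQ m (S r) F).
    { unfold F. apply inQ_winv. replace (S r) with (S (S (S (r - 2)))) by lia. apply inQ_comm; auto using in_RF_winv.
      apply inQ_comm; auto using in_RF_winv. apply inQ_winv. apply inQ_comm; auto using in_RF_winv. }
    destruct (merge1 r w i j (winv c) Hr Hw Hi Hj (in_RF_winv _ _ Hc) (inQ_winv _ _ _ Qc)) as [w' [e [Hw' [Qe E]]]].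
    exists w', (e ++ F). split; [auto|split; [apply inQ_app; auto|]].
    rewrite K, app_assoc, E. grp.
  - apply merge1; auto.
Qed.

Lemma mergeK r K : 3 <= r -> Kok m r K -> forall w, wok w ->
  exists w' e, wok w' /\ inQ m (S r) e /\ Pw w ++ flat_map spsi K =~ Pw w' ++ e.
Proof.
  intros Hr HK. induction HK as [|k K Hk HK IH]; intros w Hw.
  - exists w, []. split; [auto|split; [apply inQ_nil|simpl; reflexivity]].
  - destruct (merge r w k Hr Hw (Forall_cons _ Hk (Forall_nil _))) as [w1 [e1 [Hw1 [Q1 E1]]]].
    destruct (IH w1 Hw1) as [w2 [e2 [Hw2 [Q2 E2]]]].
    exists w2, (e2 ++ wconj e1 (flat_map spsi K)). split; [auto|split].
    + apply inQ_app; auto. apply inQ_conj; auto. eapply in_RF_K; eauto.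
    + simpl. rewrite app_assoc, E1.
      transitivity ((Pw w1 ++ flat_map spsi K) ++ wconj e1 (flat_map spsi K)); [grp|].
      rewrite E2. grp.
Qed.

Lemma core n : forall r, m + 1 <= r + n -> 3 <= r -> forall w q, wok w -> inQ m r q ->
  exists w', wok w' /\ Pw w ++ q =~ Pw w'.
Proof.
  induction n as [|n IHn]; intros r Hrn Hr w q Hw Hq.
  - exists w. split; auto. rewrite (Q_top m q), app_nil_r; [reflexivity|].
    apply inQ_mono with r; auto; lia.
  - destruct Hq as [L [HL E]].
    enough (exists w', wok w' /\ Pw w ++ qeval L =~ Pw w') as [w' [Hw' E']] by (exists w'; split; auto; rewrite E; auto).
    clear q E. revert w Hw. induction HL as [|[b s] L [Hl Hs] HL IHL]; intros w Hw.
    + exists w. split; auto. simpl. rewrite app_nil_r. reflexivity.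
    + change (qeval ((b,s) :: L)) with (sgn b (tm s) ++ qeval L). simpl in Hl, Hs.
      assert (STEP : exists w1, wok w1 /\ Pw w ++ sgn b (tm s) =~ Pw w1).
      { destruct (Nat.eq_dec (length s) r) as [El|Nl].
        - assert (Hm : 0 < m).
          { destruct s as [|y s']; simpl in El; [lia|]. inversion Hs; subst. lia. }
          destruct (term_SpanR m r s Hm Hr El Hs) as [K [e [HK [Qe Ee]]]].
          assert (Es : sgn b (tm s) =~ flat_map spsi (if b then rev (map kflip K) else K) ++
                                       (if b then wconj (winv e) (winv (flat_map spsi K)) else e)).
          { destruct b; simpl; rewrite Ee; [|reflexivity]. rewrite winv_app, <- flat_map_spsi_winv. grp. }
          assert (HK' : Kok m r (if b then rev (map kflip K) else K)).
          { destruct b; auto. apply Forall_rev, Forall_map. eapply Forall_impl; [|exact HK].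
            unfold kflip, ki, kj, kc; simpl; auto. }
          assert (Qe' : inQ m (S r) (if b then wconj (winv e) (winv (flat_map spsi K)) else e)).
          { destruct b; auto. apply inQ_conj; [apply inQ_winv; auto|apply in_RF_winv; eapply in_RF_K; eauto]. }
          destruct (mergeK r _ Hr HK' w Hw) as [w1 [e1 [Hw1 [Q1 E1]]]].
          destruct (IHn (S r) ltac:(lia) ltac:(lia) w1 (e1 ++ _) Hw1 (inQ_app _ _ _ _ Q1 Qe')) as [w2 [Hw2 E2]].
          exists w2. split; auto. rewrite Es, app_assoc, E1, <- app_assoc. exact E2.
        - apply (IHn (S r) ltac:(lia) ltac:(lia) w _ Hw). apply inQ_sgn. apply inQ_tm; auto; lia. }
      destruct STEP as [w1 [Hw1 E1]]. destruct (IHL w1 Hw1) as [w2 [Hw2 E2]].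
      exists w2. split; auto. rewrite app_assoc, E1. exact E2.
Qed.

Lemma partII q : inQ m 3 q -> exists w, wok w /\ q =~ Pw w.
Proof.
  intro Hq. set (w0 := fun _ _ : nat => @nil letter).
  assert (Hw0 : wok w0) by (intros i j; apply in_RF_nil).
  assert (P0 : Pw w0 =~ []).
  { unfold Pw. induction (PL (m-1)) as [|p l IH]; [reflexivity|]. cbn [flat_map]. rewrite IH, app_nil_r.
    unfold psi, w0. grp. }
  destruct (core m 3 ltac:(lia) ltac:(lia) w0 q Hw0 Hq) as [w [Hw E]].
  exists w. split; auto. rewrite <- E, P0. reflexivity.
Qed.

End T8.


Definition CL (m : nat) := flat_map (fun i => map (fun j => (i,j)) (seq i (m - i))) (seq 0 m).
Definition upd1 {A} (w : nat -> A) k (v : A) := fun k' => if k' =? k then v else w k'.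

Lemma flat_map_pairs {A} (F : nat * nat -> list A) (g : nat -> list nat) l :
  flat_map F (flat_map (fun i => map (fun j => (i,j)) (g i)) l) = flat_map (fun i => flat_map (fun j => F (i,j)) (g i)) l.
Proof.
  induction l as [|i l IH]; simpl; auto. rewrite flat_map_app, IH. f_equal.
  induction (g i) as [|j t IH2]; simpl; auto. rewrite IH2. reflexivity.
Qed.

Lemma wrep_comm k w : wrep k w ++ w = w ++ wrep k w.
Proof. induction k; simpl; [rewrite app_nil_r; reflexivity|]. rewrite <- app_assoc, IHk. reflexivity. Qed.

Section T9.
Variable m : nat.
Infix "=~" := (rf_eq m) (at level 70).

Lemma wpow_succ w n : wpow w n ++ w =~ wpow w (n + 1).
Proof.
  destruct n as [|p|p].
  - simpl. rewrite app_nil_r. reflexivity.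
  - replace (Z.pos p + 1)%Z with (Z.pos (Pos.succ p)) by lia.
    change (wrep (Pos.to_nat p) w ++ w =~ wrep (Pos.to_nat (Pos.succ p)) w).
    rewrite Pos2Nat.inj_succ. simpl. rewrite wrep_comm. reflexivity.
  - destruct (Pos.succ_pred_or p) as [->|E].
    + replace (Z.neg 1 + 1)%Z with 0%Z by lia. simpl. rewrite app_nil_r. apply inv_l.
    + set (q := Pos.pred p) in *. rewrite <- E.
      replace (Z.neg (Pos.succ q) + 1)%Z with (Z.neg q) by lia.
      change (wrep (Pos.to_nat (Pos.succ q)) (winv w) ++ w =~ wrep (Pos.to_nat q) (winv w)).
      rewrite Pos2Nat.inj_succ. simpl. rewrite <- wrep_comm, <- app_assoc, inv_l, app_nil_r. reflexivity.
Qed.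

Lemma wpow_opp w n : wpow w (- n) = wpow (winv w) n.
Proof. destruct n; simpl; rewrite ?winv_winv; reflexivity. Qed.

Lemma wpow_pred w n : wpow w n ++ winv w =~ wpow w (n - 1).
Proof.
  replace n with (- (- n))%Z at 1 by lia. rewrite wpow_opp, wpow_succ.
  replace (- n + 1)%Z with (- (n - 1))%Z by lia. rewrite wpow_opp, winv_winv. reflexivity.
Qed.

Lemma inQ_wrep r k w : inQ m r w -> inQ m r (wrep k w).
Proof. intro H; induction k; simpl; [apply inQ_nil|apply inQ_app; auto]. Qed.
Lemma inQ_wpow r w n : inQ m r w -> inQ m r (wpow w n).
Proof. intro H; destruct n; simpl; [apply inQ_nil|apply inQ_wrep; auto|apply inQ_wrep, inQ_winv; auto]. Qed.

Definition Xw (a : nat -> Z) := flat_map (fun i => wpow (gen i) (a i)) (seq 0 m).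
Definition cg (p : nat * nat) := wcomm (gen (snd p)) (gen (fst p)).
Definition Cw (b : nat -> nat -> Z) := flat_map (fun p => wpow (cg p) (b (fst p) (snd p))) (CL m).

Lemma CL_In i j : i <= j -> j < m -> In (i,j) (CL m).
Proof. intros. unfold CL. apply in_flat_map. exists i. split; [apply in_seq; lia|]. apply in_map_iff. exists j. split; auto. apply in_seq; lia. Qed.
Lemma CL_In_inv p : In p (CL m) -> fst p < m /\ snd p < m.
Proof. intro H. unfold CL in H. apply in_flat_map in H as [i [Hi H]]. apply in_map_iff in H as [j [<- Hj]].
  apply in_seq in Hi, Hj. simpl; lia. Qed.
Lemma CL_NoDup : NoDup (CL m).
Proof. apply NoDup_pairs; intros; apply seq_NoDup. Qed.

Lemma cg_inQ p : fst p < m -> snd p < m -> inQ m 2 (cg p).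
Proof. intros. unfold cg. apply (inQ_tm m 2 [(snd p, false); (fst p, false)]); [simpl; lia|repeat constructor; simpl; auto]. Qed.
Lemma cg_inRF p : fst p < m -> snd p < m -> in_RF m (cg p).
Proof. intros. unfold cg. apply in_RF_wcomm; apply in_RF_gen; auto. Qed.

Lemma Cw_inQ b : inQ m 2 (Cw b).
Proof. unfold Cw. assert (H := CL_In_inv). induction (CL m) as [|p l IH]; [apply inQ_nil|]. cbn [flat_map].
  apply inQ_app; [|apply IH; intros; apply H; right; auto]. apply inQ_wpow. destruct (H p (or_introl eq_refl)). apply cg_inQ; auto. Qed.
Lemma Cw_inRF b : in_RF m (Cw b).
Proof. unfold Cw. assert (H := CL_In_inv). induction (CL m) as [|p l IH]; [apply in_RF_nil|]. cbn [flat_map].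
  apply in_RF_app; [|apply IH; intros; apply H; right; auto]. apply in_RF_wpow. destruct (H p (or_introl eq_refl)). apply cg_inRF; auto. Qed.
Lemma Xw_inRF a : in_RF m (Xw a).
Proof. unfold Xw. assert (H : forall i, In i (seq 0 m) -> i < m) by (intros i Hi; apply in_seq in Hi; lia).
  induction (seq 0 m) as [|i l IH]; [apply in_RF_nil|]. cbn [flat_map].
  apply in_RF_app; [|apply IH; intros; apply H; right; auto]. apply in_RF_wpow, in_RF_gen, H; left; auto. Qed.

Lemma Lmove L y : in_RF m L -> fst y < m ->
  exists q, inQ m 3 q /\ L ++ [y] =~ [y] ++ L ++ flat_map (fun z => wcomm [z] [y]) L ++ q.
Proof.
  intros HL Hy. induction L as [|z L IH].
  - exists []. split; [apply inQ_nil|]. simpl. reflexivity.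
  - inversion HL as [|? ? Hz HL']; subst. destruct (IH HL') as [q [Hq E]].
    assert (Q2 : inQ m 2 (wcomm [z] [y])).
    { apply (inQ_tm m 2 [z; y]); [simpl; lia|repeat constructor; auto]. }
    exists (wconj (wcomm (wcomm [z] [y]) L) (flat_map (fun z => wcomm [z] [y]) L) ++ q). split.
    + apply inQ_app; auto. apply inQ_conj; [apply inQ_comm; auto|].
      clear - HL' Hy. induction HL' as [|z L Hz _ IH]; cbn [flat_map]; [apply in_RF_nil|]. apply in_RF_app; auto.
      apply in_RF_wcomm; constructor; auto; constructor.
    + change ((z :: L) ++ [y]) with ([z] ++ (L ++ [y])). rewrite E.
      change (flat_map (fun z0 => wcomm [z0] [y]) (z :: L)) with (wcomm [z] [y] ++ flat_map (fun z0 => wcomm [z0] [y]) L).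
      change (z :: L) with ([z] ++ L). grp.
Qed.

Lemma comm_letters z y : fst z < m -> fst y < m ->
  exists q, inQ m 3 q /\ wcomm [z] [y] =~ sgn (xorb (snd z) (snd y)) (wcomm (gen (fst z)) (gen (fst y))) ++ q.
Proof.
  intros Hz Hy. destruct z as [i e], y as [j f]; simpl in *.
  assert (Q2 : inQ m 2 (wcomm (gen i) (gen j))).
  { apply (inQ_tm m 2 [(i,false); (j,false)]); [simpl; lia|repeat constructor; auto]. }
  assert (Hgi : in_RF m (gen i)) by (apply in_RF_gen; auto).
  assert (Hgj : in_RF m (gen j)) by (apply in_RF_gen; auto).
  destruct e, f; cbn [xorb sgn fst snd].
  - change [(i,true)] with (winv (gen i)). change [(j,true)] with (winv (gen j)).
    exists (wcomm (wcomm (gen i) (gen j)) (winv (gen i) ++ winv (gen j))). split.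
    + apply inQ_comm; auto. apply in_RF_app; apply in_RF_winv; auto.
    + grp.
  - change [(i,true)] with (winv (gen i)). change [(j,false)] with (gen j).
    exists (wcomm (winv (wcomm (gen i) (gen j))) (winv (gen i))). split.
    + apply inQ_comm; auto using in_RF_winv. apply inQ_winv; auto.
    + grp.
  - change [(i,false)] with (gen i). change [(j,true)] with (winv (gen j)).
    exists (wcomm (winv (wcomm (gen i) (gen j))) (winv (gen j))). split.
    + apply inQ_comm; auto using in_RF_winv. apply inQ_winv; auto.
    + grp.
  - exists []. split; [apply inQ_nil|]. rewrite app_nil_r. reflexivity.
Qed.

Lemma Cw_split b i j v : i <= j -> j < m -> exists A B,
  Cw b = A ++ wpow (cg (i,j)) (b i j) ++ B /\ Cw (upd2 b i j v) = A ++ wpow (cg (i,j)) v ++ B.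
Proof.
  intros Hij Hj. unfold Cw.
  destruct (fm_split pair_eq_dec (CL m) (i,j) (fun p => wpow (cg p) (b (fst p) (snd p)))
           (fun p => wpow (cg p) (upd2 b i j v (fst p) (snd p))) CL_NoDup (CL_In _ _ Hij Hj))
    as [A [B [E1 E2]]].
  - intros [i' j'] Hne. simpl. unfold upd2. destruct (i' =? i) eqn:Ei, (j' =? j) eqn:Ej; simpl; auto.
    apply Nat.eqb_eq in Ei, Ej; subst; congruence.
  - exists A, B. rewrite E1, E2. simpl. unfold upd2. rewrite !Nat.eqb_refl. simpl. auto.
Qed.

Lemma CStep0 b i j s : i <= j -> j < m ->
  exists b' q, inQ m 3 q /\ Cw b ++ sgn s (cg (i,j)) =~ Cw b' ++ q.
Proof.
  intros Hij Hj.
  set (v := if s then (b i j - 1)%Z else (b i j + 1)%Z).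
  destruct (Cw_split b i j v Hij Hj) as [A [B [E1 E2]]].
  assert (HB : in_RF m B).
  { assert (H := Cw_inRF b). rewrite E1 in H. unfold in_RF in H. apply Forall_app in H as [_ H].
    apply Forall_app in H as [_ H]. exact H. }
  assert (Q2 : inQ m 2 (sgn s (cg (i,j)))) by (apply inQ_sgn, cg_inQ; simpl; lia).
  exists (upd2 b i j v), (wcomm B (sgn s (cg (i,j)))). split; [apply inQ_comm'; auto|].
  rewrite E1, E2.
  transitivity (A ++ (wpow (cg (i,j)) (b i j) ++ sgn s (cg (i,j))) ++ B ++ wcomm B (sgn s (cg (i,j)))); [grp|].
  unfold v. destruct s; simpl; [rewrite wpow_pred|rewrite wpow_succ]; grp.
Qed.

Lemma CStep b l k s : l < m -> k < m ->
  exists b' q, inQ m 3 q /\ Cw b ++ sgn s (wcomm (gen l) (gen k)) =~ Cw b' ++ q.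
Proof.
  intros Hl Hk. destruct (lt_eq_lt_dec k l) as [[H|H]|H].
  - apply CStep0; lia.
  - subst. exists b, []. split; [apply inQ_nil|].
    assert (E : sgn s (wcomm (gen l) (gen l)) =~ []) by (destruct s; unfold sgn; grp).
    rewrite E, !app_nil_r. reflexivity.
  - destruct (CStep0 b l k (negb s) ltac:(lia) Hk) as [b' [q [Hq E]]]. exists b', q. split; auto.
    rewrite <- E. unfold cg; cbn [fst snd]. destruct s; unfold sgn, negb; grp.
Qed.

Lemma CSteps L y : in_RF m L -> fst y < m -> forall b,
  exists b' q, inQ m 3 q /\ Cw b ++ flat_map (fun z => wcomm [z] [y]) L =~ Cw b' ++ q.
Proof.
  intros HL Hy. induction HL as [|z L Hz HL IH]; intro b.
  - exists b, []. split; [apply inQ_nil|]. simpl. reflexivity.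
  - destruct (comm_letters z y Hz Hy) as [q0 [Hq0 E0]].
    destruct (CStep b (fst z) (fst y) (xorb (snd z) (snd y)) Hz Hy) as [b1 [q1 [Hq1 E1]]].
    destruct (IH b1) as [b2 [q2 [Hq2 E2]]].
    assert (HF : in_RF m (flat_map (fun z => wcomm [z] [y]) L)).
    { clear - HL Hy. induction HL as [|z L Hz _ IH]; cbn [flat_map]; [apply in_RF_nil|]. apply in_RF_app; auto.
      apply in_RF_wcomm; constructor; auto; constructor. }
    exists b2, (q2 ++ wconj (q1 ++ q0) (flat_map (fun z => wcomm [z] [y]) L)). split.
    + apply inQ_app; auto. apply inQ_conj; auto. apply inQ_app; auto.
    + change (flat_map (fun z0 => wcomm [z0] [y]) (z :: L)) with (wcomm [z] [y] ++ flat_map (fun z0 => wcomm [z0] [y]) L).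
      rewrite E0.
      transitivity ((Cw b ++ sgn (xorb (snd z) (snd y)) (wcomm (gen (fst z)) (gen (fst y)))) ++ q0 ++ flat_map (fun z0 => wcomm [z0] [y]) L); [grp|].
      rewrite E1.
      transitivity ((Cw b1 ++ flat_map (fun z0 => wcomm [z0] [y]) L) ++ wconj (q1 ++ q0) (flat_map (fun z0 => wcomm [z0] [y]) L)); [grp|].
      rewrite E2. grp.
Qed.

Lemma partI z : in_RF m z -> exists a b q, inQ m 3 q /\ z =~ Xw a ++ Cw b ++ q.
Proof.
  induction z as [|y z IH] using rev_ind; intro Hz.
  - exists (fun _ => 0%Z), (fun _ _ => 0%Z), []. split; [apply inQ_nil|].
    unfold Xw, Cw.
    assert (H1 : forall l : list nat, flat_map (fun i => wpow (gen i) 0%Z) l = []) by (induction l; simpl; auto).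
    assert (H2 : forall l : list (nat*nat), flat_map (fun p => wpow (cg p) 0%Z) l = []) by (induction l; simpl; auto).
    rewrite H1, H2. reflexivity.
  - unfold in_RF in Hz. apply Forall_app in Hz as [Hz Hy]. inversion Hy as [|? ? Hy1 _]; subst.
    destruct (IH Hz) as [a [b [q [Hq E]]]].
    set (k := fst y).
    set (a' := if snd y then (a k - 1)%Z else (a k + 1)%Z).
    assert (Hk : In k (seq 0 m)) by (apply in_seq; lia).
    destruct (fm_split Nat.eq_dec (seq 0 m) k (fun i => wpow (gen i) (a i)) (fun i => wpow (gen i) (upd1 a k a' i))
                (seq_NoDup _ _) Hk) as [A [B [E1 E2]]].
    { intros i Hi. unfold upd1. destruct (i =? k) eqn:Ei; auto. apply Nat.eqb_eq in Ei; congruence. }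
    assert (E2' : Xw (upd1 a k a') = A ++ wpow (gen k) a' ++ B).
    { unfold Xw. rewrite E2. unfold upd1. rewrite Nat.eqb_refl. reflexivity. }
    assert (HB : in_RF m B).
    { assert (H := Xw_inRF a). unfold Xw in H. rewrite E1 in H. unfold in_RF in H. apply Forall_app in H as [_ H].
      apply Forall_app in H as [_ H]. exact H. }
    destruct (Lmove B y HB Hy1) as [q1 [Hq1 EL]].
    set (D := flat_map (fun z => wcomm [z] [y]) B) in *.
    assert (HD : in_RF m D).
    { unfold D. clear - HB Hy1. induction HB as [|z L Hz _ IH]; cbn [flat_map]; [apply in_RF_nil|]. apply in_RF_app; auto.
      apply in_RF_wcomm; constructor; auto; constructor. }
    assert (QD : inQ m 2 D).
    { unfold D. clear - HB Hy1. induction HB as [|z L Hz _ IH]; cbn [flat_map]; [apply inQ_nil|]. apply inQ_app; auto.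
      apply (inQ_tm m 2 [z; y]); [simpl; lia|repeat constructor; auto]. }
    destruct (CSteps B y HB Hy1 b) as [b' [q2 [Hq2 EC]]]. fold D in EC.
    set (C := Cw b) in *.
    assert (HC : in_RF m C) by apply Cw_inRF.
    assert (QC : inQ m 2 C) by apply Cw_inQ.
    exists (upd1 a k a'), b', (q2 ++ wcomm D C ++ wconj q1 C ++ wcomm C [y] ++ wconj q [y]).
    assert (HY : in_RF m [y]) by (constructor; auto; constructor).
    split.
    + apply inQ_app; [auto|apply inQ_app; [apply inQ_comm; auto|apply inQ_app; [apply inQ_conj; auto|
        apply inQ_app; [apply inQ_comm; auto|apply inQ_conj; auto]]]].
    + rewrite E, E2'. unfold Xw in *. rewrite E1.
      assert (EP : wpow (gen k) (a k) ++ [y] =~ wpow (gen k) a').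
      { unfold a', k. destruct y as [kk [|]]; simpl.
        - change [(kk,true)] with (winv (gen kk)). apply wpow_pred.
        - change [(kk,false)] with (gen kk). apply wpow_succ. }
      transitivity (A ++ wpow (gen k) (a k) ++ (B ++ [y]) ++ C ++ wcomm C [y] ++ wconj q [y]); [grp|].
      rewrite EL. fold D.
      transitivity (A ++ (wpow (gen k) (a k) ++ [y]) ++ B ++ (C ++ D) ++ wcomm D C ++ wconj q1 C ++ wcomm C [y] ++ wconj q [y]); [grp|].
      assert (EC2 : C ++ D =~ Cw b' ++ q2) by exact EC. rewrite EP, EC2. grp.
Qed.

End T9.

Theorem theorem5p1 (m : nat) (z : word) :
  in_RF m z ->
  exists (alpha : nat -> Z) (beta : nat -> nat -> Z) (omega : nat -> nat -> word),
    (forall i j, in_RF m (omega i j)) /\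
    rf_eq m z (normal_form m alpha beta omega).
Proof.
  intro Hz. destruct (partI m z Hz) as [a [b [q [Hq E]]]].
  destruct (partII m q Hq) as [w [Hw Ew]].
  exists a, b, w. split; [exact Hw|].
  unfold normal_form. rewrite E, Ew.
  assert (EC : Cw m b = flat_map (fun i => flat_map (fun j => wpow (wcomm (gen j) (gen i)) (b i j)) (seq i (m - i))) (seq 0 m)).
  { unfold Cw, CL. rewrite flat_map_pairs. reflexivity. }
  assert (EP : Pw m w = flat_map (fun i => flat_map (fun j => wcomm (wcomm (w i j) (gen i)) (gen j)) (seq 0 (m - 1))) (seq 0 (m - 1))).
  { unfold Pw, PL. rewrite flat_map_pairs. reflexivity. }
  rewrite <- EC, <- EP. unfold Xw. reflexivity.
Qed.
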